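(* Let $B=b_{20}D^2+b_{11}MD+b_{02}M^2+b_{10}D+b_{01}M+b_{00}I$ with $b_{20}\ne0$ and $\Delta_2\ne0$. Then the equation $Bu=0$ has the two linearly independent analytic solutions $u_j(x)=\exp\!\left(-\frac{\mathrm i}{4b_{20}}(b_{11}x^2+2b_{10}x)\right)v_j(x)$, $j=1,2$, where $v_j(x)=w_j\!\left(\left(-\frac{\Delta_2}{4b_{20}^2}\right)^{1/4}\left(x+\frac{\Delta_1}{2\Delta_2}\right)\right)$, $w_1(z)=\mathrm e^{-z^2/2}\Phi\!\left(\frac{1-\lambda}4,\frac12;z^2\right)$, $w_2(z)=\mathrm e^{-z^2/2}z\Phi\!\left(\frac{3-\lambda}4,\frac32;z^2\right)$, and $\lambda=\frac18\left(-\frac{\Delta_2}{b_{20}^2}\right)^{-3/2}\frac{\Delta_1^2-4\Delta_2\Delta_0}{b_{20}^4}$.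
   Context: $D=-\mathrm i\,d/dx$, $M$ = multiplication by $x$. $\Delta_2=b_{11}^2-4b_{20}b_{02}$, $\Delta_1=2b_{11}b_{10}-4b_{20}b_{01}$, $\Delta_0=b_{10}^2-4b_{20}b_{00}-2\mathrm i b_{20}b_{11}$. Powers: $z^\mu=\mathrm e^{\mu\log|z|+\mathrm i\mu\operatorname{Arg}z}$ with principal argument $\operatorname{Arg}z\in(-\pi,\pi]$. $\Phi(p,q;z)=\sum_{k\ge0}\frac{(p)_k}{k!(q)_k}z^k$ with $(p)_0=1$, $(p)_k=p(p+1)\cdots(p+k-1)$. *)

(* Defs.v *)
From Stdlib Require Import Reals Lra Arith ClassicalEpsilon.
Open Scope R_scope.

Definition CC : Type := (R * R)%type.
Definition RtoC (r : R) : CC := (r, 0).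
Definition C0 : CC := (0, 0).
Definition C1 : CC := (1, 0).
Definition Ci : CC := (0, 1).
Definition Cadd (z w : CC) : CC := (fst z + fst w, snd z + snd w).
Definition Copp (z : CC) : CC := (- fst z, - snd z).
Definition Csub (z w : CC) : CC := Cadd z (Copp w).
Definition Cmul (z w : CC) : CC :=
  (fst z * fst w - snd z * snd w, fst z * snd w + snd z * fst w).
Definition Cinv (z : CC) : CC :=
  (fst z / (fst z ^ 2 + snd z ^ 2), - snd z / (fst z ^ 2 + snd z ^ 2)).
Definition Cdiv (z w : CC) : CC := Cmul z (Cinv w).
Definition Cnorm (z : CC) : R := sqrt (fst z ^ 2 + snd z ^ 2).
Fixpoint Cpown (z : CC) (n : nat) : CC :=
  match n with O => C1 | S k => Cmul z (Cpown z k) end.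

Definition Cexp (z : CC) : CC := (exp (fst z) * cos (snd z), exp (fst z) * sin (snd z)).

(** Principal argument, with values in (-PI, PI]. *)
Definition Arg (z : CC) : R :=
  let x := fst z in let y := snd z in
  if Rlt_dec 0 x then atan (y / x)
  else if Rlt_dec x 0 then
         (if Rle_dec 0 y then atan (y / x) + PI else atan (y / x) - PI)
  else if Rlt_dec 0 y then PI / 2
  else if Rlt_dec y 0 then - (PI / 2)
  else 0.

(** Principal power z^mu = exp(mu log|z| + i mu Arg z) (used only for z <> 0). *)
Definition Clog (z : CC) : CC := (ln (Cnorm z), Arg z).
Definition Cpow (z mu : CC) : CC := Cexp (Cmul mu (Clog z)).

Fixpoint Csum (f : nat -> CC) (N : nat) : CC :=
  match N with O => f O | S k => Cadd (Csum f k) (f (S k)) end.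
Definition Cseries_cv (f : nat -> CC) (l : CC) : Prop :=
  Un_cv (fun N => fst (Csum f N)) (fst l) /\ Un_cv (fun N => snd (Csum f N)) (snd l).

Fixpoint poch (p : CC) (k : nat) : CC :=
  match k with O => C1 | S j => Cmul (poch p j) (Cadd p (RtoC (INR j))) end.

(** Kummer's function Phi(p,q;z) = sum_k (p)_k / (k! (q)_k) z^k, defined as the
    sum of the series (chosen by the epsilon operator; the series converges
    for the parameters used below). *)
Definition Phi_term (p q z : CC) (k : nat) : CC :=
  Cmul (Cdiv (poch p k) (Cmul (RtoC (INR (Factorial.fact k))) (poch q k))) (Cpown z k).
Definition Phi (p q z : CC) : CC :=
  epsilon (inhabits C0) (fun l => Cseries_cv (Phi_term p q z) l).

Definition Cderiv_at (u : R -> CC) (x : R) (l : CC) : Prop :=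
  derivable_pt_lim (fun t => fst (u t)) x (fst l) /\
  derivable_pt_lim (fun t => snd (u t)) x (snd l).

Definition C_analytic (u : R -> CC) : Prop :=
  forall x0 : R, exists r : R, 0 < r /\ exists a : nat -> CC,
    forall x : R, Rabs (x - x0) < r ->
      Cseries_cv (fun n => Cmul (a n) (Cpown (RtoC (x - x0)) n)) (u x).

(** * The operator B = b20 D^2 + b11 M D + b02 M^2 + b10 D + b01 M + b00 I,
    D = -i d/dx, M = multiplication by x.
    Given u' and u'' (first and second derivatives), with D u = -i u' and
    D^2 u = - u'', the value (B u)(x) is: *)
Definition B_apply (b20 b11 b02 b10 b01 b00 : CC) (u u1 u2 : R -> CC) (x : R) : CC :=
  let X := RtoC x in
  let Du := Cmul (Copp Ci) (u1 x) in
  let D2u := Copp (u2 x) in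
  Cadd (Cmul b20 D2u)
  (Cadd (Cmul b11 (Cmul X Du))
  (Cadd (Cmul b02 (Cmul (Cmul X X) (u x)))
  (Cadd (Cmul b10 Du)
  (Cadd (Cmul b01 (Cmul X (u x)))
        (Cmul b00 (u x)))))).

Definition solves_B (b20 b11 b02 b10 b01 b00 : CC) (u : R -> CC) : Prop :=
  exists u1 u2 : R -> CC,
    forall x : R, Cderiv_at u x (u1 x) /\ Cderiv_at u1 x (u2 x) /\
                  B_apply b20 b11 b02 b10 b01 b00 u u1 u2 x = C0.

Definition lin_indep2 (f g : R -> CC) : Prop :=
  forall c1 c2 : CC, (forall x : R, Cadd (Cmul c1 (f x)) (Cmul c2 (g x)) = C0) ->
    c1 = C0 /\ c2 = C0.

Definition Delta2 (b20 b11 b02 : CC) : CC :=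
  Csub (Cmul b11 b11) (Cmul (RtoC 4) (Cmul b20 b02)).
Definition Delta1 (b20 b11 b10 b01 : CC) : CC :=
  Csub (Cmul (RtoC 2) (Cmul b11 b10)) (Cmul (RtoC 4) (Cmul b20 b01)).
Definition Delta0 (b20 b11 b10 b00 : CC) : CC :=
  Csub (Csub (Cmul b10 b10) (Cmul (RtoC 4) (Cmul b20 b00)))
       (Cmul (Cmul (RtoC 2) Ci) (Cmul b20 b11)).

Definition lam (b20 b11 b02 b10 b01 b00 : CC) : CC :=
  let D2 := Delta2 b20 b11 b02 in
  let D1 := Delta1 b20 b11 b10 b01 in
  let D0 := Delta0 b20 b11 b10 b00 in
  Cmul (RtoC (1/8))
   (Cmul (Cpow (Copp (Cdiv D2 (Cmul b20 b20))) (RtoC (-3/2)))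
         (Cdiv (Csub (Cmul D1 D1) (Cmul (RtoC 4) (Cmul D2 D0))) (Cpown b20 4))).

Definition w1 (la z : CC) : CC :=
  Cmul (Cexp (Copp (Cdiv (Cmul z z) (RtoC 2))))
       (Phi (Cdiv (Csub (RtoC 1) la) (RtoC 4)) (RtoC (1/2)) (Cmul z z)).
Definition w2 (la z : CC) : CC :=
  Cmul (Cexp (Copp (Cdiv (Cmul z z) (RtoC 2))))
       (Cmul z (Phi (Cdiv (Csub (RtoC 3) la) (RtoC 4)) (RtoC (3/2)) (Cmul z z))).

Definition zarg (b20 b11 b02 b10 b01 : CC) (x : R) : CC :=
  let D2 := Delta2 b20 b11 b02 in
  let D1 := Delta1 b20 b11 b10 b01 in
  Cmul (Cpow (Copp (Cdiv D2 (Cmul (RtoC 4) (Cmul b20 b20)))) (RtoC (1/4)))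
       (Cadd (RtoC x) (Cdiv D1 (Cmul (RtoC 2) D2))).

Definition prefac (b20 b11 b10 : CC) (x : R) : CC :=
  Cexp (Copp (Cmul (Cdiv Ci (Cmul (RtoC 4) b20))
                   (Cadd (Cmul b11 (RtoC (x ^ 2))) (Cmul (RtoC 2) (Cmul b10 (RtoC x)))))).

Definition u_sol1 (b20 b11 b02 b10 b01 b00 : CC) (x : R) : CC :=
  Cmul (prefac b20 b11 b10 x)
       (w1 (lam b20 b11 b02 b10 b01 b00) (zarg b20 b11 b02 b10 b01 x)).
Definition u_sol2 (b20 b11 b02 b10 b01 b00 : CC) (x : R) : CC :=
  Cmul (prefac b20 b11 b10 x)
       (w2 (lam b20 b11 b02 b10 b01 b00) (zarg b20 b11 b02 b10 b01 x)).

(* Main.v *)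
From Stdlib Require Import Reals Lra Lia Psatz ClassicalEpsilon FunctionalExtensionality.
From Coquelicot Require Import Coquelicot.
Require Import Defs.
Open Scope R_scope.

Lemma Cadd_e : Cadd = Cplus. Proof. reflexivity. Qed.
Lemma Cmul_e : Cmul = Cmult. Proof. reflexivity. Qed.
Lemma Copp_e : Defs.Copp = Complex.Copp. Proof. reflexivity. Qed.
Lemma Csub_e : Csub = Cminus. Proof. reflexivity. Qed.
Lemma Cinv_e : Defs.Cinv = Complex.Cinv. Proof. reflexivity. Qed.
Lemma Cdiv_e : Defs.Cdiv = Complex.Cdiv. Proof. reflexivity. Qed.
Lemma RtoC_e : Defs.RtoC = Complex.RtoC. Proof. reflexivity. Qed.
Lemma C0_e : C0 = Complex.RtoC 0. Proof. reflexivity. Qed.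
Lemma C1_e : C1 = Complex.RtoC 1. Proof. reflexivity. Qed.
Lemma Cpown_e : Cpown = Complex.Cpow.
Proof. apply functional_extensionality; intro z; apply functional_extensionality; intro n.
  induction n; simpl; [reflexivity| now rewrite IHn]. Qed.
Lemma eqC_intro (a b : C) : Cplus a (Complex.RtoC 0) = Cplus b (Complex.RtoC 0) -> a = b.
Proof. intros H. rewrite !Cplus_0_r in H. exact H. Qed.

Ltac toC := change CC with C in *; rewrite ?Csub_e, ?Cadd_e, ?Cmul_e, ?Copp_e, ?Cdiv_e, ?Cinv_e, ?RtoC_e, ?C0_e, ?C1_e, ?Cpown_e in *;
  try match goal with |- @eq _ ?a ?b => change (@eq C a b); apply eqC_intro end.


Definition Ccv (u : nat -> CC) (l : CC) :=
  Un_cv (fun n => fst (u n)) (fst l) /\ Un_cv (fun n => snd (u n)) (snd l).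

Lemma Ccv_unique u l1 l2 : Ccv u l1 -> Ccv u l2 -> l1 = l2.
Proof. intros [H1 H2] [H3 H4]. destruct l1, l2; simpl in *.
  f_equal; eapply UL_sequence; eauto. Qed.

Lemma Un_cv_const c : Un_cv (fun _ => c) c.
Proof. intros e He. exists 0%nat. intros. unfold R_dist. rewrite Rminus_diag, Rabs_R0. lra. Qed.

Lemma Ccv_add u v l m : Ccv u l -> Ccv v m -> Ccv (fun n => Cadd (u n) (v n)) (Cadd l m).
Proof. intros [H1 H2] [H3 H4]. split; simpl; apply CV_plus; auto. Qed.

Lemma Ccv_mul_l c u l : Ccv u l -> Ccv (fun n => Cmul c (u n)) (Cmul c l).
Proof. intros [H1 H2]. split; simpl.
  - apply CV_minus; apply CV_mult; auto; apply Un_cv_const.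
  - apply CV_plus; apply CV_mult; auto; apply Un_cv_const. Qed.

Lemma Ccv_opp u l : Ccv u l -> Ccv (fun n => Copp (u n)) (Copp l).
Proof. intros [H1 H2]. split; simpl; apply CV_opp; auto. Qed.

Lemma Ccv_sub u v l m : Ccv u l -> Ccv v m -> Ccv (fun n => Csub (u n) (v n)) (Csub l m).
Proof. intros. apply Ccv_add; auto. apply Ccv_opp; auto. Qed.

Lemma Ccv_const c : Ccv (fun _ => c) c.
Proof. split; apply Un_cv_const. Qed.

Lemma Ccv_ext u v l : (forall n, u n = v n) -> Ccv u l -> Ccv v l.
Proof. intros E. replace v with u; auto. apply functional_extensionality; auto. Qed.

Lemma Un_cv_S u l : Un_cv u l -> Un_cv (fun n => u (S n)) l.
Proof. intros H e He. destruct (H e He) as [N HN]. exists N. intros. apply HN. lia. Qed.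

Lemma Ccv_S u l : Ccv u l -> Ccv (fun n => u (S n)) l.
Proof. intros [H1 H2]; split; apply (Un_cv_S (fun n => _ (u n))); auto. Qed.

Lemma Un_cv_S_inv u l : Un_cv (fun n => u (S n)) l -> Un_cv u l.
Proof. intros H e He. destruct (H e He) as [N HN]. exists (S N). intros n Hn.
  destruct n as [|n]; [lia|]. apply HN. lia. Qed.

Lemma Ccv_S_inv u l : Ccv (fun n => u (S n)) l -> Ccv u l.
Proof. intros [H1 H2]; split; apply (Un_cv_S_inv (fun n => _ (u n))); auto. Qed.

Lemma Cmod_le_abs z : Cmod z <= Rabs (fst z) + Rabs (snd z).
Proof. unfold Cmod. destruct z as [a b]; simpl.
  rewrite <- (sqrt_Rsqr (Rabs a + Rabs b)) by (pose proof (Rabs_pos a); pose proof (Rabs_pos b); lra).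
  apply sqrt_le_1_alt. unfold Rsqr. pose proof (Rabs_pos a); pose proof (Rabs_pos b).
  replace (a * (a * 1) + b * (b * 1)) with (Rabs a * Rabs a + Rabs b * Rabs b).
  - nra.
  - rewrite <- !Rabs_mult, !Rabs_right by nra. ring. Qed.

Lemma Cmod_fst z : Rabs (fst z) <= Cmod z.
Proof. apply re_le_Cmod. Qed.
Lemma Cmod_snd z : Rabs (snd z) <= Cmod z.
Proof. eapply Rle_trans; [apply Rmax_r|apply Rmax_Cmod]. Qed.

Lemma Ccv_Cmod_le u l B : Ccv u l -> (forall n, Cmod (u n) <= B) -> Cmod l <= B.
Proof. intros [H1 H2] HB. destruct (Rle_dec (Cmod l) B) as [?|Hn]; auto. exfalso.
  set (e := Cmod l - B). assert (He : 0 < e / 2) by (unfold e; lra).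
  destruct (H1 _ He) as [N1 HN1]. destruct (H2 _ He) as [N2 HN2].
  specialize (HN1 (max N1 N2) ltac:(lia)). specialize (HN2 (max N1 N2) ltac:(lia)).
  unfold R_dist in *. set (w := u (max N1 N2)) in *.
  pose proof (Cmod_triangle w (l - w)%C) as T.
  replace (w + (l - w))%C with l in T by (change CC with C in *; ring).
  pose proof (Cmod_le_abs (l - w)%C) as T2. simpl in T2.
  rewrite <- (Rabs_Ropp (fst l + - fst w)), <- (Rabs_Ropp (snd l + - snd w)) in T2.
  replace (- (fst l + - fst w)) with (fst w - fst l) in T2 by ring.
  replace (- (snd l + - snd w)) with (snd w - snd l) in T2 by ring.
  specialize (HB (max N1 N2)). fold w in HB. unfold e in *. lra. Qed.

Lemma fst_Csum f N : fst (Csum f N) = sum_f_R0 (fun n => fst (f n)) N.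
Proof. induction N; simpl; auto. rewrite IHN; auto. Qed.
Lemma snd_Csum f N : snd (Csum f N) = sum_f_R0 (fun n => snd (f n)) N.
Proof. induction N; simpl; auto. rewrite IHN; auto. Qed.

Lemma Csum_ext f g N : (forall n, f n = g n) -> Csum f N = Csum g N.
Proof. intros E; induction N; simpl; rewrite ?IHN, ?E; auto. Qed.

Lemma Csum_add f g N : Csum (fun n => Cadd (f n) (g n)) N = Cadd (Csum f N) (Csum g N).
Proof. induction N; simpl; auto. rewrite IHN. toC. ring. Qed.

Lemma Csum_scal c f N : Csum (fun n => Cmul c (f n)) N = Cmul c (Csum f N).
Proof. induction N; simpl; auto. rewrite IHN. toC. ring. Qed.

Lemma Csum_opp f N : Csum (fun n => Copp (f n)) N = Copp (Csum f N).
Proof. induction N; simpl; auto. rewrite IHN. toC. ring. Qed.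

Lemma Csum_S f N : Csum f (S N) = Cadd (f O) (Csum (fun n => f (S n)) N).
Proof. induction N; simpl in *; auto. rewrite IHN. toC. ring. Qed.

Lemma Csum_Cmod f N : Cmod (Csum f N) <= sum_f_R0 (fun n => Cmod (f n)) N.
Proof. induction N; simpl. lra. eapply Rle_trans. apply Cmod_triangle. lra. Qed.

Lemma sum_f_R0_le_Series a N : (forall n, 0 <= a n) -> ex_series a -> sum_f_R0 a N <= Series a.
Proof. intros Hp He.
  rewrite (Series_incr_n a (S N)) by (auto; lia). simpl.
  assert (0 <= Series (fun k => a (S (N + k)))).
  { pose proof (Series_scal_l 0 (fun _ => 0)) as Z. rewrite Rmult_0_l in Z.
    rewrite (Series_ext _ (fun _ => 0)) in Z by (intros; ring).
    rewrite <- Z. apply Series_le. intros; split; auto; lra.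
    apply (ex_series_incr_n a (S N)); auto. }
  lra. Qed.

Definition entire (a : nat -> CC) := forall rho, 0 <= rho -> ex_series (fun n => Cmod (a n) * rho ^ n).

Definition ES (a : nat -> CC) (z : CC) : CC :=
  (Series (fun n => fst (Cmul (a n) (Cpown z n))), Series (fun n => snd (Cmul (a n) (Cpown z n)))).

Lemma Cmod_term a z n : Cmod (Cmul a (Cpown z n)) = Cmod a * Cmod z ^ n.
Proof. toC. rewrite Cmod_mult, Cmod_pow. auto. Qed.

Lemma ex_series_comp_abs (f : nat -> R) (b : nat -> R) : (forall n, Rabs (f n) <= b n) -> ex_series b -> ex_series f.
Proof. intros H Hb. apply (ex_series_le f b); auto. Qed.

Lemma ES_cv a z : entire a -> Cseries_cv (fun n => Cmul (a n) (Cpown z n)) (ES a z).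
Proof. intros Ha. pose proof (Ha (Cmod z) (Cmod_ge_0 z)) as Hs.
  split.
  - assert (Hex : ex_series (fun n => fst (Cmul (a n) (Cpown z n)))).
    { apply (ex_series_comp_abs _ _ (fun n => Rle_trans _ _ _ (Cmod_fst _) (Req_le _ _ (Cmod_term _ _ _)))); auto. }
    pose proof (Series_correct _ Hex) as HH. apply is_series_Reals in HH.
    intros e He. destruct (HH e He) as [N HN]. exists N. intros n Hn. rewrite fst_Csum. apply HN; auto.
  - assert (Hex : ex_series (fun n => snd (Cmul (a n) (Cpown z n)))).
    { apply (ex_series_comp_abs _ _ (fun n => Rle_trans _ _ _ (Cmod_snd _) (Req_le _ _ (Cmod_term _ _ _)))); auto. }
    pose proof (Series_correct _ Hex) as HH. apply is_series_Reals in HH.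
    intros e He. destruct (HH e He) as [N HN]. exists N. intros n Hn. rewrite snd_Csum. apply HN; auto.
Qed.

Lemma ES_unique a z l : entire a -> Cseries_cv (fun n => Cmul (a n) (Cpown z n)) l -> ES a z = l.
Proof. intros Ha H. eapply Ccv_unique. apply (ES_cv a z Ha). exact H. Qed.

Lemma ex_series_nonneg_le (f g : nat -> R) : (forall n, 0 <= f n <= g n) -> ex_series g -> ex_series f.
Proof. intros H Hg. apply (ex_series_le f g); auto. intros n. specialize (H n).
  change (norm (f n)) with (Rabs (f n)). rewrite Rabs_right; lra. Qed.

Lemma RtoC_plus' a b : Defs.RtoC (a + b) = Cadd (Defs.RtoC a) (Defs.RtoC b).
Proof. unfold Defs.RtoC, Cadd; simpl. f_equal. ring. Qed.
Lemma RtoC_mult' a b : Defs.RtoC (a * b) = Cmul (Defs.RtoC a) (Defs.RtoC b).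
Proof. unfold Defs.RtoC, Cmul; simpl. f_equal; ring. Qed.

Lemma Cmod_RtoC r : Cmod (Defs.RtoC r) = Rabs r.
Proof. toC. apply Cmod_R. Qed.

Lemma INR_le_pow2 n : INR (S n) <= 2 ^ (S n).
Proof. induction n. simpl; lra. rewrite S_INR. assert (1 <= 2 ^ S n) by (apply pow_R1_Rle; lra). change (2 ^ S (S n)) with (2 * 2 ^ S n). lra. Qed.
Lemma INR_le_pow4 n : INR (S n) <= 4 ^ (S n).
Proof. eapply Rle_trans. apply INR_le_pow2. apply pow_incr. lra. Qed.

Definition shR (b : nat -> CC) (n : nat) : CC := match n with O => C0 | S m => b m end.
Definition dA (a : nat -> CC) (n : nat) : CC := Cmul (Defs.RtoC (INR (S n))) (a (S n)).

Lemma entire_add a b : entire a -> entire b -> entire (fun n => Cadd (a n) (b n)).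
Proof. intros Ha Hb rho Hr.
  apply (ex_series_nonneg_le _ (fun n => plus (Cmod (a n) * rho ^ n) (Cmod (b n) * rho ^ n))).
  - intros n. pose proof (pow_le rho n Hr). split. apply Rmult_le_pos; auto; apply Cmod_ge_0.
    change (plus ?x ?y) with (x + y). toC. pose proof (Cmod_triangle (a n) (b n)). nra.
  - apply (@ex_series_plus R_AbsRing R_NormedModule); auto. Qed.

Lemma entire_scal c a : entire a -> entire (fun n => Cmul c (a n)).
Proof. intros Ha rho Hr.
  apply (ex_series_nonneg_le _ (fun n => scal (Cmod c) (Cmod (a n) * rho ^ n))).
  - intros n. pose proof (pow_le rho n Hr). change (scal ?x ?y) with (x * y). toC. rewrite Cmod_mult.
    split. apply Rmult_le_pos; auto. apply Rmult_le_pos; apply Cmod_ge_0. lra.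
  - apply (@ex_series_scal R_AbsRing R_NormedModule); auto. Qed.

Lemma entire_shR b : entire b -> entire (shR b).
Proof. intros Hb rho Hr. apply ex_series_incr_1. simpl.
  apply (ex_series_nonneg_le _ (fun n => scal rho (Cmod (b n) * rho ^ n))).
  - intros n. pose proof (pow_le rho n Hr). change (scal ?x ?y) with (x * y).
    pose proof (Cmod_ge_0 (b n)). simpl pow. split. apply Rmult_le_pos; [auto|apply Rmult_le_pos; auto]. right; ring.
  - apply (@ex_series_scal R_AbsRing R_NormedModule); auto. Qed.

Lemma entire_dA a : entire a -> entire (dA a).
Proof. intros Ha rho Hr.
  pose proof (Ha (2 * rho + 2) ltac:(lra)) as H. apply ex_series_incr_1 in H.
  eapply (ex_series_nonneg_le _ _); [|exact H]. intros n. simpl.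
  unfold dA. toC. rewrite Cmod_mult, Cmod_R, Rabs_right by (apply Rle_ge, pos_INR).
  pose proof (Cmod_ge_0 (a (S n))) as H0. pose proof (pow_le rho n Hr).
  pose proof (pos_INR (S n)). split. apply Rmult_le_pos; [apply Rmult_le_pos|]; auto.
  rewrite (Rmult_comm (INR (S n))), Rmult_assoc. apply Rmult_le_compat_l; auto.
  replace (2 * rho + 2) with (2 * (rho + 1)) by ring.
  change ((2 * (rho + 1)) ^ S n) with (2 * (rho + 1) * (2 * (rho + 1)) ^ n).
  rewrite Rpow_mult_distr.
  pose proof (INR_le_pow2 n) as H3. change (2 ^ S n) with (2 * 2 ^ n) in H3.
  replace (2 * (rho + 1) * (2 ^ n * (rho + 1) ^ n)) with ((2 * 2 ^ n) * ((rho + 1) * (rho + 1) ^ n)) by ring.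
  apply Rmult_le_compat; auto.
  assert (rho ^ n <= (rho + 1) ^ n) by (apply pow_incr; lra).
  pose proof (pow_le (rho+1) n ltac:(lra)). nra. Qed.

Lemma Csum_Cmul_ES a z N : Csum (fun n => Cmul (a n) (Cpown z n)) N = Csum (fun n => Cmul (a n) (Cpown z n)) N.
Proof. reflexivity. Qed.

Lemma ES_add a b z : entire a -> entire b -> ES (fun n => Cadd (a n) (b n)) z = Cadd (ES a z) (ES b z).
Proof. intros Ha Hb. apply ES_unique. apply entire_add; auto.
  eapply Ccv_ext. 2: apply (Ccv_add _ _ _ _ (ES_cv a z Ha) (ES_cv b z Hb)).
  intros N. simpl. rewrite <- Csum_add. apply Csum_ext. intros n. toC. ring. Qed.

Lemma ES_scal c a z : entire a -> ES (fun n => Cmul c (a n)) z = Cmul c (ES a z).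
Proof. intros Ha. apply ES_unique. apply entire_scal; auto.
  eapply Ccv_ext. 2: apply (Ccv_mul_l c _ _ (ES_cv a z Ha)).
  intros N. simpl. rewrite <- Csum_scal. apply Csum_ext. intros n. toC. ring. Qed.

Lemma ES_shR b z : entire b -> ES (shR b) z = Cmul z (ES b z).
Proof. intros Hb. apply ES_unique. apply entire_shR; auto.
  apply Ccv_S_inv. eapply Ccv_ext. 2: apply (Ccv_mul_l z _ _ (ES_cv b z Hb)).
  intros N. rewrite Csum_S. rewrite <- Csum_scal. simpl shR. simpl Cpown.
  replace (Cmul C0 C1) with C0 by (toC; ring).
  replace (Csum (fun n : nat => Cmul z (Cmul (b n) (Cpown z n))) N) with
    (Csum (fun n : nat => Cmul (b n) (Cmul z (Cpown z n))) N).
  toC; ring. apply Csum_ext; intros; toC; ring. Qed.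

Lemma ES_ext a b z : (forall n, a n = b n) -> ES a z = ES b z.
Proof. intros E. replace b with a; auto. apply functional_extensionality; auto. Qed.

Lemma entire_zero : entire (fun _ => C0).
Proof. intros rho Hr. apply (ex_series_nonneg_le _ (fun _ => 0)).
  intros n. toC. rewrite Cmod_0. lra. exists 0. apply is_series_Reals. intros e He. exists O.
  intros n _. unfold R_dist. rewrite sum_cte. rewrite Rmult_0_l, Rminus_0_r, Rabs_R0. auto. Qed.

Lemma ES_zero z : ES (fun _ => C0) z = C0.
Proof. apply ES_unique. apply entire_zero. eapply Ccv_ext. 2: apply Ccv_const.
  intros N. induction N; simpl in *. toC; ring. rewrite <- IHN. toC; ring. Qed.

Lemma ES_at0 a : entire a -> ES a C0 = a O.
Proof. intros Ha. apply ES_unique; auto. eapply Ccv_ext. 2: apply Ccv_const.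
  intros N. induction N; simpl in *. toC; ring. rewrite <- IHN. toC; ring. Qed.

Lemma pow_S_INR_bound t m : 1 <= t -> INR (S m) * t ^ m <= 3 * t * (4 * t) ^ (S m).
Proof. intros Ht. rewrite Rpow_mult_distr. pose proof (INR_le_pow4 m).
  assert (1 <= t ^ m) by (apply pow_R1_Rle; lra).
  assert (t ^ m <= t ^ S m) by (simpl; nra).
  assert (0 <= 4 ^ S m) by (apply pow_le; lra).
  assert (t ^ S m <= 3 * t * t ^ S m) by nra.
  apply Rle_trans with (4 ^ S m * t ^ m). apply Rmult_le_compat_r; lra.
  replace (3 * t * (4 ^ S m * t ^ S m)) with (4 ^ S m * (3 * t * t ^ S m)) by ring.
  apply Rmult_le_compat_l; lra. Qed.

Definition Eterm (w k : CC) (m : nat) : CC :=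
  Csub (Csub (Cpown (Cadd w k) (S m)) (Cpown w (S m))) (Cmul (Defs.RtoC (INR (S m))) (Cmul k (Cpown w m))).

Lemma Eterm_S w k m : Eterm w k (S m) =
  Cadd (Cmul (Cadd w k) (Eterm w k m)) (Cmul (Defs.RtoC (INR (S m))) (Cmul (Cmul k k) (Cpown w m))).
Proof. unfold Eterm. rewrite (S_INR (S m)), RtoC_plus'. simpl Cpown. toC. ring. Qed.

Lemma Eterm_bound w k t m : Cmod w + Cmod k <= t -> 1 <= t ->
  Cmod (Eterm w k m) <= Cmod k ^ 2 * (4 * t) ^ (S m).
Proof. intros Hs Ht. pose proof (Cmod_ge_0 w); pose proof (Cmod_ge_0 k).
  induction m.
  - unfold Eterm. simpl. replace (Csub (Csub (Cmul (Cadd w k) C1) (Cmul w C1)) (Cmul (Defs.RtoC 1) (Cmul k C1))) with C0 by (toC; ring).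
    toC. rewrite Cmod_0. pose proof (pow2_ge_0 (Cmod k)). nra.
  - rewrite Eterm_S. eapply Rle_trans. toC. apply Cmod_triangle.
    toC. rewrite !Cmod_mult, Cmod_R, Rabs_right by (apply Rle_ge, pos_INR).
    rewrite Cmod_pow.
    assert (Cmod (w + k)%C <= t) by (eapply Rle_trans; [apply Cmod_triangle|lra]).
    assert (Cmod w ^ m <= t ^ m) by (apply pow_incr; lra).
    pose proof (pow_S_INR_bound t m Ht).
    assert (0 <= Cmod k * Cmod k) by nra.
    pose proof (pos_INR (S m)).
    assert (0 <= Cmod w ^ m) by (apply pow_le; lra).
    assert (0 <= (4*t)^ S m) by (apply pow_le; lra).
    pose proof (Cmod_ge_0 (Eterm w k m)).
    change ((4*t) ^ S (S m)) with (4 * t * (4*t) ^ S m).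
    assert (Cmod (w+k)%C * Cmod (Eterm w k m) <= t * (Cmod k ^ 2 * (4 * t) ^ S m)).
    { apply Rmult_le_compat; auto. apply Cmod_ge_0. }
    assert (INR (S m) * (Cmod k * Cmod k * Cmod w ^ m) <= Cmod k ^ 2 * (INR (S m) * t ^ m)).
    { simpl pow. replace (Cmod k * (Cmod k * 1)) with (Cmod k * Cmod k) by ring.
      assert (INR (S m) * Cmod w ^ m <= INR (S m) * t ^ m) by (apply Rmult_le_compat_l; auto). nra. }
    assert (0 <= Cmod k ^ 2) by (apply pow2_ge_0).
    assert (Cmod k ^ 2 * (INR (S m) * t ^ m) <= Cmod k ^ 2 * (3 * t * (4 * t) ^ S m)) by (apply Rmult_le_compat_l; auto).
    nra. Qed.

Lemma sum_f_R0_S g N : sum_f_R0 g (S N) = g O + sum_f_R0 (fun n => g (S n)) N.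
Proof. induction N. simpl. ring. rewrite tech5. rewrite IHN. simpl. ring. Qed.

Lemma sum_scal_l c h N : sum_f_R0 (fun m => c * h m) N = c * sum_f_R0 h N.
Proof. induction N; simpl; [ring|rewrite IHN; ring]. Qed.

Lemma ES_diff a w k : entire a -> Cmod k <= 1 ->
  Cmod (Csub (Csub (ES a (Cadd w k)) (ES a w)) (Cmul k (ES (dA a) w))) <=
  Cmod k ^ 2 * Series (fun n => Cmod (a n) * (4 * (Cmod w + 1)) ^ n).
Proof. intros Ha Hk. set (t := Cmod w + 1).
  set (g := fun n => Cmod (a n) * (4 * t) ^ n).
  assert (Hg : ex_series g) by (apply Ha; pose proof (Cmod_ge_0 w); unfold t; lra).
  set (s := fun N => Csub (Csub (Csum (fun n => Cmul (a n) (Cpown (Cadd w k) n)) (S N))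
                               (Csum (fun n => Cmul (a n) (Cpown w n)) (S N)))
                        (Cmul k (Csum (fun n => Cmul (dA a n) (Cpown w n)) N))).
  apply (Ccv_Cmod_le s).
  - apply Ccv_sub. apply Ccv_sub. apply (Ccv_S (Csum _)). apply ES_cv; auto.
    apply (Ccv_S (Csum _)). apply ES_cv; auto.
    apply Ccv_mul_l. apply ES_cv. apply entire_dA; auto.
  - intros N. unfold s.
    replace (Csub (Csub (Csum (fun n => Cmul (a n) (Cpown (Cadd w k) n)) (S N))
                               (Csum (fun n => Cmul (a n) (Cpown w n)) (S N)))
                        (Cmul k (Csum (fun n => Cmul (dA a n) (Cpown w n)) N)))
      with (Csum (fun m => Cmul (a (S m)) (Eterm w k m)) N).
    + eapply Rle_trans. apply Csum_Cmod.
      apply Rle_trans with (sum_f_R0 (fun m => Cmod k ^ 2 * g (S m)) N).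
      * apply sum_Rle. intros m _. unfold g. toC. rewrite Cmod_mult.
        pose proof (Eterm_bound w k t m ltac:(unfold t; lra) ltac:(unfold t; pose proof (Cmod_ge_0 w); lra)).
        pose proof (Cmod_ge_0 (a (S m))). 
        assert (Cmod (a (S m)) * Cmod (Eterm w k m) <= Cmod (a (S m)) * (Cmod k ^ 2 * (4 * t) ^ S m)) by (apply Rmult_le_compat_l; auto).
        nra.
      * rewrite sum_scal_l. apply Rmult_le_compat_l. apply pow2_ge_0.
        apply Rle_trans with (sum_f_R0 g (S N)).
        rewrite sum_f_R0_S. assert (0 <= g O) by (unfold g; simpl; rewrite Rmult_1_r; apply Cmod_ge_0). lra.
        apply sum_f_R0_le_Series; auto. intros n; unfold g. apply Rmult_le_pos. apply Cmod_ge_0.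
        apply pow_le. pose proof (Cmod_ge_0 w); unfold t; lra.
    + rewrite !Csum_S. rewrite <- Csum_scal.
      replace (Csum (fun m : nat => Cmul (a (S m)) (Eterm w k m)) N) with
        (Cadd (Csum (fun m => Cmul (a (S m)) (Cpown (Cadd w k) (S m))) N)
           (Copp (Cadd (Csum (fun m => Cmul (a (S m)) (Cpown w (S m))) N)
                     (Csum (fun n => Cmul k (Cmul (dA a n) (Cpown w n))) N)))).
      * simpl Cpown. toC. ring.
      * rewrite <- Csum_add, <- Csum_opp, <- Csum_add. apply Csum_ext. intros m.
        unfold Eterm, dA. toC. ring.
Qed.

Lemma lim_eq f x l1 l2 : derivable_pt_lim f x l1 -> l1 = l2 -> derivable_pt_lim f x l2.
Proof. intros H E; subst; auto. Qed.

Lemma Cderiv_const c x : Cderiv_at (fun _ => c) x C0.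
Proof. split; simpl; apply derivable_pt_lim_const. Qed.

Lemma Cderiv_RtoC f x l : derivable_pt_lim f x l -> Cderiv_at (fun t => Defs.RtoC (f t)) x (Defs.RtoC l).
Proof. intros H; split; simpl; auto. apply derivable_pt_lim_const. Qed.

Lemma Cderiv_id x : Cderiv_at (fun t => Defs.RtoC t) x C1.
Proof. apply (Cderiv_RtoC (fun t => t)). apply derivable_pt_lim_id. Qed.

Lemma Cderiv_add f g x l m : Cderiv_at f x l -> Cderiv_at g x m ->
  Cderiv_at (fun t => Cadd (f t) (g t)) x (Cadd l m).
Proof. intros [H1 H2] [H3 H4]. split; simpl.
  exact (derivable_pt_lim_plus _ _ _ _ _ H1 H3).
  exact (derivable_pt_lim_plus _ _ _ _ _ H2 H4). Qed.

Lemma Cderiv_opp f x l : Cderiv_at f x l -> Cderiv_at (fun t => Defs.Copp (f t)) x (Defs.Copp l).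
Proof. intros [H1 H2]. split; simpl.
  exact (derivable_pt_lim_opp _ _ _ H1). exact (derivable_pt_lim_opp _ _ _ H2). Qed.

Lemma Cderiv_sub f g x l m : Cderiv_at f x l -> Cderiv_at g x m ->
  Cderiv_at (fun t => Csub (f t) (g t)) x (Csub l m).
Proof. intros. apply Cderiv_add; auto. apply Cderiv_opp; auto. Qed.

Lemma Cderiv_mul f g x l m : Cderiv_at f x l -> Cderiv_at g x m ->
  Cderiv_at (fun t => Cmul (f t) (g t)) x (Cadd (Cmul l (g x)) (Cmul (f x) m)).
Proof. intros [H1 H2] [H3 H4]. split; simpl.
  - eapply lim_eq. exact (derivable_pt_lim_minus _ _ _ _ _ (derivable_pt_lim_mult _ _ _ _ _ H1 H3) (derivable_pt_lim_mult _ _ _ _ _ H2 H4)).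
    cbv beta; ring.
  - eapply lim_eq. exact (derivable_pt_lim_plus _ _ _ _ _ (derivable_pt_lim_mult _ _ _ _ _ H1 H4) (derivable_pt_lim_mult _ _ _ _ _ H2 H3)).
    cbv beta; ring. Qed.

Lemma Cderiv_ext f g x l : (forall t, f t = g t) -> Cderiv_at f x l -> Cderiv_at g x l.
Proof. intros E H. replace g with f; auto. apply functional_extensionality; auto. Qed.

Lemma Cderiv_eq f x l1 l2 : Cderiv_at f x l1 -> l1 = l2 -> Cderiv_at f x l2.
Proof. intros H E; subst; auto. Qed.

Lemma Cderiv_unique f x l1 l2 : Cderiv_at f x l1 -> Cderiv_at f x l2 -> l1 = l2.
Proof. intros [H1 H2] [H3 H4]. destruct l1, l2; simpl in *. f_equal; eapply uniqueness_limite; eauto. Qed.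

Lemma Cderiv_scal c f x l : Cderiv_at f x l -> Cderiv_at (fun t => Cmul c (f t)) x (Cmul c l).
Proof. intros H. eapply Cderiv_eq. apply Cderiv_mul. apply Cderiv_const. exact H. toC. ring. Qed.

Lemma Cderiv_exp g x l : Cderiv_at g x l -> Cderiv_at (fun t => Cexp (g t)) x (Cmul (Cexp (g x)) l).
Proof. intros [H1 H2]. unfold Cexp. split; simpl.
  - eapply lim_eq. exact (derivable_pt_lim_mult _ _ _ _ _
       (derivable_pt_lim_comp _ _ _ _ _ H1 (derivable_pt_lim_exp _))
       (derivable_pt_lim_comp _ _ _ _ _ H2 (derivable_pt_lim_cos _))).
    unfold comp; cbv beta; ring.
  - eapply lim_eq. exact (derivable_pt_lim_mult _ _ _ _ _
       (derivable_pt_lim_comp _ _ _ _ _ H1 (derivable_pt_lim_exp _))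
       (derivable_pt_lim_comp _ _ _ _ _ H2 (derivable_pt_lim_sin _))).
    unfold comp; cbv beta; ring. Qed.

Lemma Cderiv_shift f x0 h l : Cderiv_at f (x0 + h) l -> Cderiv_at (fun s => f (x0 + s)) h l.
Proof. intros [H1 H2].
  assert (Hd : derivable_pt_lim (fun s => x0 + s) h 1).
  { eapply lim_eq. exact (derivable_pt_lim_plus _ _ _ _ _ (derivable_pt_lim_const x0 h) (derivable_pt_lim_id h)). ring. }
  split.
  - eapply lim_eq. exact (derivable_pt_lim_comp _ (fun t => fst (f t)) _ _ _ Hd H1). ring.
  - eapply lim_eq. exact (derivable_pt_lim_comp _ (fun t => snd (f t)) _ _ _ Hd H2). ring. Qed.

Definition Cdo (f : R -> CC) (x : R) (l : CC) :=
  forall eps, 0 < eps -> exists del, 0 < del /\ forall h, h <> 0 -> Rabs h < del ->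
    Cmod (Csub (Csub (f (x + h)) (f x)) (Cmul (Defs.RtoC h) l)) <= eps * Rabs h.

Lemma Cderiv_Cdo f x l : Cderiv_at f x l -> Cdo f x l.
Proof. intros [H1 H2] eps He.
  destruct (H1 (eps/2) ltac:(lra)) as [d1 Hd1]. destruct (H2 (eps/2) ltac:(lra)) as [d2 Hd2].
  exists (Rmin d1 d2). split. apply Rmin_pos; apply cond_pos.
  intros h Hh Hlt. eapply Rle_trans. apply Cmod_le_abs. simpl.
  specialize (Hd1 h Hh (Rlt_le_trans _ _ _ Hlt (Rmin_l _ _))).
  specialize (Hd2 h Hh (Rlt_le_trans _ _ _ Hlt (Rmin_r _ _))).
  replace (fst (f (x + h)) + - fst (f x) + - (h * fst l - 0 * snd l)) with (h * ((fst (f (x + h)) - fst (f x)) / h - fst l)) by (field; auto).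
  replace (snd (f (x + h)) + - snd (f x) + - (h * snd l + 0 * fst l)) with (h * ((snd (f (x + h)) - snd (f x)) / h - snd l)) by (field; auto).
  rewrite !Rabs_mult. pose proof (Rabs_pos h). nra. Qed.

Lemma Cdo_Cderiv f x l : Cdo f x l -> Cderiv_at f x l.
Proof. intros H. split; intros eps He; destruct (H (eps/2) ltac:(lra)) as [d [Hd Hh]];
  exists (mkposreal d Hd); intros h Hh0 Hlt; specialize (Hh h Hh0 Hlt); simpl in Hlt.
  - pose proof (Rle_trans _ _ _ (Cmod_fst _) Hh) as K. simpl in K.
    replace ((fst (f (x + h)) - fst (f x)) / h - fst l) with ((fst (f (x + h)) + - fst (f x) + - (h * fst l - 0 * snd l)) / h) by (field; auto).
    unfold Rdiv. rewrite Rabs_mult, Rabs_inv. pose proof (Rabs_pos_lt h Hh0).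
    apply Rle_lt_trans with (eps / 2). apply (Rmult_le_reg_r (Rabs h)); auto.
    rewrite Rmult_assoc, Rinv_l by lra. lra. lra.
  - pose proof (Rle_trans _ _ _ (Cmod_snd _) Hh) as K. simpl in K.
    replace ((snd (f (x + h)) - snd (f x)) / h - snd l) with ((snd (f (x + h)) + - snd (f x) + - (h * snd l + 0 * fst l)) / h) by (field; auto).
    unfold Rdiv. rewrite Rabs_mult, Rabs_inv. pose proof (Rabs_pos_lt h Hh0).
    apply Rle_lt_trans with (eps / 2). apply (Rmult_le_reg_r (Rabs h)); auto.
    rewrite Rmult_assoc, Rinv_l by lra. lra. lra. Qed.

Lemma Series_nonneg_ge0 (f : nat -> R) : (forall n, 0 <= f n) -> ex_series f -> 0 <= Series f.
Proof. intros H He. eapply Rle_trans. 2: apply (sum_f_R0_le_Series f O); auto. simpl. auto. Qed.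

Lemma ES_chain a g x g' : entire a -> Cderiv_at g x g' ->
  Cderiv_at (fun t => ES a (g t)) x (Cmul (ES (dA a) (g x)) g').
Proof. intros Ha Hg. apply Cdo_Cderiv. intros eps He.
  apply Cderiv_Cdo in Hg. set (w := g x) in *. set (F' := ES (dA a) w).
  set (K := Cmod F'). set (M := Series (fun n => Cmod (a n) * (4 * (Cmod w + 1)) ^ n)).
  set (G := Cmod g' + 1).
  assert (HK : 0 <= K) by apply Cmod_ge_0.
  assert (HG : 1 <= G) by (pose proof (Cmod_ge_0 g'); unfold G; lra).
  assert (HM : 0 <= M).
  { apply Series_nonneg_ge0. intros n. apply Rmult_le_pos. apply Cmod_ge_0. apply pow_le.
    pose proof (Cmod_ge_0 w); lra. apply Ha. pose proof (Cmod_ge_0 w); lra. }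
  destruct (Hg 1 Rlt_0_1) as [d0 [Hd0 H0]].
  assert (He1 : 0 < eps / (2 * (K + 1))) by (apply Rdiv_lt_0_compat; lra).
  destruct (Hg _ He1) as [d1 [Hd1 H1]].
  assert (Hd2 : 0 < 1 / G) by (apply Rdiv_lt_0_compat; lra).
  assert (Hd3 : 0 < eps / (2 * (M * G ^ 2 + 1))) by (apply Rdiv_lt_0_compat; [lra| pose proof (pow2_ge_0 G); nra]).
  exists (Rmin (Rmin d0 d1) (Rmin (1 / G) (eps / (2 * (M * G ^ 2 + 1))))).
  split. repeat apply Rmin_pos; auto.
  intros h Hh Hlt.
  assert (L0 : Rabs h < d0) by (eapply Rlt_le_trans; [exact Hlt|]; eapply Rle_trans; apply Rmin_l).
  assert (L1 : Rabs h < d1) by (eapply Rlt_le_trans; [exact Hlt|]; eapply Rle_trans; [apply Rmin_l|apply Rmin_r]).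
  assert (L2 : Rabs h < 1 / G) by (eapply Rlt_le_trans; [exact Hlt|]; eapply Rle_trans; [apply Rmin_r|apply Rmin_l]).
  assert (L3 : Rabs h < eps / (2 * (M * G ^ 2 + 1))) by (eapply Rlt_le_trans; [exact Hlt|]; eapply Rle_trans; [apply Rmin_r|apply Rmin_r]).
  specialize (H0 h Hh L0). specialize (H1 h Hh L1).
  set (k := Csub (g (x + h)) w) in *.
  assert (Hgk : g (x + h) = Cadd w k) by (unfold k; toC; ring).
  set (A := Rabs h). assert (HA : 0 < A) by (apply Rabs_pos_lt; auto).
  assert (Hk : Cmod k <= A * G).
  { replace k with (Cadd (Csub k (Cmul (Defs.RtoC h) g')) (Cmul (Defs.RtoC h) g')) by (toC; ring).
    eapply Rle_trans. toC. apply Cmod_triangle. toC. rewrite Cmod_mult, Cmod_R.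
    unfold k, w in *. toC. fold A. unfold G. rewrite Rmult_1_l in H0. fold A in H0. nra. }
  assert (Hk1 : Cmod k <= 1).
  { assert (A * G < 1). { apply (Rmult_lt_compat_r G) in L2; [|lra]. unfold Rdiv in L2.
      rewrite Rmult_1_l, Rinv_l in L2 by lra. exact L2. } lra. }
  pose proof (ES_diff a w k Ha Hk1) as HD. fold M in HD. fold F' in HD.
  rewrite Hgk.
  replace (Csub (Csub (ES a (Cadd w k)) (ES a w)) (Cmul (Defs.RtoC h) (Cmul F' g')))
    with (Cadd (Csub (Csub (ES a (Cadd w k)) (ES a w)) (Cmul k F'))
               (Cmul F' (Csub k (Cmul (Defs.RtoC h) g')))) by (toC; ring).
  eapply Rle_trans. toC. apply Cmod_triangle. toC. rewrite Cmod_mult. fold K.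
  unfold k, w in *. toC.
  set (X1 := Cmod _) in HD |- *. set (X2 := Cmod (_ - _)%C) in H1 |- *.
  assert (HX2 : K * X2 <= eps / 2 * A).
  { apply Rle_trans with (K * (eps / (2 * (K + 1)) * A)). apply Rmult_le_compat_l; auto.
    unfold Rdiv. rewrite Rinv_mult. 
    assert (K * / (K + 1) <= 1). { apply (Rmult_le_reg_r (K + 1)); [lra|]. rewrite Rmult_assoc, Rinv_l by lra. lra. }
    pose proof (Rinv_0_lt_compat (K+1) ltac:(lra)).
    replace (K * (eps * (/ 2 * / (K + 1)) * A)) with ((K * / (K + 1)) * (eps * / 2 * A)) by ring.
    replace (eps * / 2 * A) with (1 * (eps * / 2 * A)) at 2 by ring.
    apply Rmult_le_compat_r; auto. nra. }
  assert (HX1 : X1 <= eps / 2 * A).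
  { eapply Rle_trans. exact HD.
    assert (Cmod k ^ 2 <= (A * G) ^ 2) by (apply pow_incr; split; [apply Cmod_ge_0|auto]).
    assert (H2 : A * (M * G ^ 2 + 1) <= eps / 2).
    { fold A in L3. apply (Rmult_lt_compat_r (2 * (M * G ^ 2 + 1))) in L3; [|pose proof (pow2_ge_0 G); nra].
      unfold Rdiv in L3. rewrite Rmult_assoc, Rinv_l in L3 by (pose proof (pow2_ge_0 G); nra).
      replace (A * (2 * (M * G ^ 2 + 1))) with (2 * (A * (M * G ^ 2 + 1))) in L3 by ring. lra. }
    apply Rle_trans with ((A * G) ^ 2 * M). apply Rmult_le_compat_r; auto.
    replace ((A * G) ^ 2 * M) with (A * (A * (M * G ^ 2))) by ring.
    apply (Rmult_le_compat_l A) in H2. 2: apply Rlt_le, HA.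
    assert (A * (A * (M * G ^ 2)) <= A * (A * (M * G ^ 2 + 1))).
    { apply Rmult_le_compat_l; [lra|]. apply Rmult_le_compat_l; lra. }
    lra. }
  lra. Qed.

Lemma Cexp_pair_mul a b c d : Cmul (Cexp (a, b)) (Cexp (c, d)) = Cexp (a + c, b + d).
Proof. unfold Cexp, Cmul; simpl. rewrite exp_plus, cos_plus, sin_plus. f_equal; ring. Qed.

Lemma Cexp_add a b : Cexp (Cadd a b) = Cmul (Cexp a) (Cexp b).
Proof. destruct a, b. rewrite Cexp_pair_mul. reflexivity. Qed.

Lemma Cexp_nz z : Cexp z <> C0.
Proof. unfold Cexp, C0. intros H. injection H as H1 H2.
  pose proof (exp_pos (fst z)). pose proof (sin2_cos2 (snd z)). unfold Rsqr in *.
  assert (cos (snd z) = 0) by (apply (Rmult_eq_reg_l (exp (fst z))); lra).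
  assert (sin (snd z) = 0) by (apply (Rmult_eq_reg_l (exp (fst z))); lra).
  rewrite H3, H4 in H0. lra. Qed.

Lemma sqrt_sq_pos a : 0 <= a -> sqrt (a ^ 2) = a.
Proof. intros H. rewrite <- Rsqr_pow2. apply sqrt_Rsqr; auto. Qed.

Lemma Cexp_polar z : z <> C0 -> Cexp (Clog z) = z.
Proof. intros Hz. destruct z as [x y]. unfold Clog, Cnorm, Cexp; cbn [fst snd].
  assert (Hr : 0 < x ^ 2 + y ^ 2).
  { destruct (Req_dec x 0); destruct (Req_dec y 0). subst; exfalso; apply Hz; reflexivity.
    all: try (exfalso; apply Hz; subst; reflexivity).
    all: pose proof (pow2_ge_0 x); pose proof (pow2_ge_0 y).
    assert (0 < y ^ 2) by (apply pow2_gt_0; auto); lra.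
    assert (0 < x ^ 2) by (apply pow2_gt_0; auto); lra.
    assert (0 < x ^ 2) by (apply pow2_gt_0; auto); lra. }
  set (r := sqrt (x ^ 2 + y ^ 2)).
  assert (Hrp : 0 < r) by (apply sqrt_lt_R0; auto).
  assert (Hr2 : r * r = x ^ 2 + y ^ 2) by (apply sqrt_sqrt; lra).
  rewrite exp_ln by auto.
  unfold Arg; cbn [fst snd].
  destruct (Rlt_dec 0 x) as [Hx|Hx].
  - rewrite cos_atan, sin_atan.
    assert (E : sqrt (1 + (y / x)²) = r / x).
    { rewrite <- (sqrt_Rsqr (r / x)) by (apply Rlt_le, Rdiv_lt_0_compat; auto).
      f_equal. unfold Rsqr. replace (r / x * (r / x)) with ((r * r) / (x * x)) by (field; lra). rewrite Hr2. field. lra. }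
    rewrite E. f_equal; field; lra.
  - destruct (Rlt_dec x 0) as [Hx'|Hx'].
    + assert (E : sqrt (1 + (y / x)²) = r / (- x)).
      { rewrite <- (sqrt_Rsqr (r / - x)) by (apply Rlt_le, Rdiv_lt_0_compat; lra).
        f_equal. unfold Rsqr. replace (r / - x * (r / - x)) with ((r * r) / (x * x)) by (field; lra). rewrite Hr2. field. lra. }
      destruct (Rle_dec 0 y).
      * rewrite cos_plus, sin_plus, cos_PI, sin_PI, cos_atan, sin_atan, E. f_equal; field; lra.
      * rewrite cos_minus, sin_minus, cos_PI, sin_PI, cos_atan, sin_atan, E. f_equal; field; lra.
    + assert (x = 0) by lra. subst x.
      destruct (Rlt_dec 0 y).
      * rewrite cos_PI2, sin_PI2. replace r with y. f_equal; ring.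
        unfold r. replace (0 ^ 2 + y ^ 2) with (y ^ 2) by ring. rewrite sqrt_sq_pos; lra.
      * destruct (Rlt_dec y 0).
        -- rewrite cos_neg, sin_neg, cos_PI2, sin_PI2. replace r with (- y). f_equal; ring.
           unfold r. replace (0 ^ 2 + y ^ 2) with ((-y) ^ 2) by ring. rewrite sqrt_sq_pos; lra.
        -- exfalso. apply Hz. unfold C0. f_equal. lra. Qed.

Lemma Cpow_real z mu : Cpow z (Defs.RtoC mu) = Cexp (mu * ln (Cnorm z), mu * Arg z).
Proof. unfold Cpow, Clog, Cmul, Defs.RtoC; cbn [fst snd]. f_equal. f_equal; ring. Qed.

Lemma Cmul_RtoC_pair r z : Cmul (Defs.RtoC r) z = (r * fst z, r * snd z).
Proof. unfold Cmul, Defs.RtoC; cbn [fst snd]. f_equal; ring. Qed.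

Lemma Cnorm_scal r z : 0 < r -> Cnorm (Cmul (Defs.RtoC r) z) = r * Cnorm z.
Proof. intros Hr. rewrite Cmul_RtoC_pair. unfold Cnorm; cbn [fst snd].
  replace ((r * fst z) ^ 2 + (r * snd z) ^ 2) with (r ^ 2 * (fst z ^ 2 + snd z ^ 2)) by ring.
  rewrite sqrt_mult_alt by (apply pow2_ge_0). rewrite sqrt_sq_pos; lra. Qed.

Lemma Arg_scal r z : 0 < r -> Arg (Cmul (Defs.RtoC r) z) = Arg z.
Proof. intros Hr. rewrite Cmul_RtoC_pair. unfold Arg; cbn [fst snd].
  destruct z as [x y]; cbn [fst snd].
  destruct (Rlt_dec 0 (r * x)); destruct (Rlt_dec 0 x); try (exfalso; nra).
  - f_equal. field. lra.
  - destruct (Rlt_dec (r * x) 0); destruct (Rlt_dec x 0); try (exfalso; nra).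
    + replace (r * y / (r * x)) with (y / x) by (field; lra).
      destruct (Rle_dec 0 (r * y)); destruct (Rle_dec 0 y); auto; exfalso; nra.
    + destruct (Rlt_dec 0 (r * y)); destruct (Rlt_dec 0 y); try (exfalso; nra); auto.
      destruct (Rlt_dec (r * y) 0); destruct (Rlt_dec y 0); try (exfalso; nra); auto. Qed.

Lemma Cnorm_pos z : z <> C0 -> 0 < Cnorm z.
Proof. intros Hz. unfold Cnorm. apply sqrt_lt_R0. destruct z as [x y]; cbn [fst snd].
  destruct (Req_dec x 0); destruct (Req_dec y 0).
  subst; exfalso; apply Hz; reflexivity.
  all: pose proof (pow2_ge_0 x); pose proof (pow2_ge_0 y).
  assert (0 < y ^ 2) by (apply pow2_gt_0; auto); lra.
  assert (0 < x ^ 2) by (apply pow2_gt_0; auto); lra.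
  assert (0 < x ^ 2) by (apply pow2_gt_0; auto); lra. Qed.

Lemma RtoC_Cexp r : 0 < r -> Defs.RtoC r = Cexp (ln r, 0).
Proof. intros Hr. unfold Cexp, Defs.RtoC; cbn [fst snd]. rewrite exp_ln, cos_0, sin_0 by auto. f_equal; ring. Qed.

Lemma key_pow (S : CC) : S <> C0 ->
  Cmul (Cmul (Cpow (Cmul (Defs.RtoC (1/4)) S) (Defs.RtoC (1/4))) (Cpow (Cmul (Defs.RtoC (1/4)) S) (Defs.RtoC (1/4))))
       (Cmul (Cpow (Cmul (Defs.RtoC (1/4)) S) (Defs.RtoC (1/4))) (Cpow (Cmul (Defs.RtoC (1/4)) S) (Defs.RtoC (1/4))))
   = Cmul (Defs.RtoC (1/4)) S /\
  Cmul (Cmul (Cmul (Cpow (Cmul (Defs.RtoC (1/4)) S) (Defs.RtoC (1/4))) (Cpow (Cmul (Defs.RtoC (1/4)) S) (Defs.RtoC (1/4))))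
             (Cpow S (Defs.RtoC (-3/2)))) S = Defs.RtoC (1/2).
Proof. intros HS. pose proof (Cnorm_pos S HS) as Hn.
  rewrite !Cpow_real, Cnorm_scal, Arg_scal, ln_mult by lra.
  pose proof (Cexp_polar S HS) as HP. unfold Clog in HP.
  remember (ln (Cnorm S)) as L. remember (Arg S) as th. clear HeqL Heqth.
  rewrite <- HP. rewrite (RtoC_Cexp (1/4)) by lra. rewrite (RtoC_Cexp (1/2)) by lra.
  rewrite !Cexp_pair_mul. split.
  - apply (f_equal Cexp). f_equal; field.
  - apply (f_equal Cexp). f_equal. 2: field.
    replace (1/4) with ((1/2) * (1/2)) by field. rewrite ln_mult by lra. field. Qed.

Definition kc (p q : CC) (k : nat) : CC :=
  Cdiv (poch p k) (Cmul (Defs.RtoC (INR (Factorial.fact k))) (poch q k)).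

Fixpoint pochR (q : R) (k : nat) : R :=
  match k with O => 1 | S j => pochR q j * (q + INR j) end.

Lemma poch_R q k : poch (Defs.RtoC q) k = Defs.RtoC (pochR q k).
Proof. induction k; simpl; auto. rewrite IHk. unfold Cmul, Cadd, Defs.RtoC; cbn [fst snd]. f_equal; ring. Qed.

Lemma pochR_pos q k : 0 < q -> 0 < pochR q k.
Proof. intros Hq. induction k; simpl. lra. pose proof (pos_INR k). nra. Qed.

Lemma RtoC_nz r : r <> 0 -> Defs.RtoC r <> C0.
Proof. intros H E. injection E. auto. Qed.

Lemma RtoC_nzC r : r <> 0 -> Complex.RtoC r <> Complex.RtoC 0.
Proof. intros H E. injection E. auto. Qed.

Lemma fact_pos k : 0 < INR (Factorial.fact k).
Proof. apply lt_0_INR. apply Factorial.lt_O_fact. Qed.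

Lemma Cmod_poch_bound p q k : 1/2 <= q ->
  Cmod (poch p k) <= (2 * Cmod p + 1) ^ k * pochR q k.
Proof. intros Hq. induction k; simpl.
  - toC. rewrite Cmod_1. lra.
  - toC. rewrite Cmod_mult. pose proof (Cmod_ge_0 (poch p k)).
    assert (Cmod (p + Complex.RtoC (INR k))%C <= Cmod p + INR k).
    { eapply Rle_trans. apply Cmod_triangle. rewrite Cmod_R, Rabs_right. lra. apply Rle_ge, pos_INR. }
    pose proof (Cmod_ge_0 (p + Complex.RtoC (INR k))%C). pose proof (Cmod_ge_0 p). pose proof (pos_INR k).
    assert (Cmod p + INR k <= (2 * Cmod p + 1) * (q + INR k)) by nra.
    pose proof (pochR_pos q k ltac:(lra)).
    assert (0 <= (2 * Cmod p + 1) ^ k) by (apply pow_le; lra).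
    apply Rle_trans with (((2 * Cmod p + 1) ^ k * pochR q k) * (Cmod p + INR k)).
    apply Rmult_le_compat; auto.
    replace ((2 * Cmod p + 1) * (2 * Cmod p + 1) ^ k * (pochR q k * (q + INR k))) with
      (((2 * Cmod p + 1) ^ k * pochR q k) * ((2 * Cmod p + 1) * (q + INR k))) by ring.
    apply Rmult_le_compat_l; auto. apply Rmult_le_pos; lra. Qed.

Lemma ex_series_exp x : ex_series (fun k => x ^ k / INR (Factorial.fact k)).
Proof. destruct (exist_exp x) as [l Hl]. exists l. apply is_series_Reals.
  unfold exp_in in Hl. intros e He. destruct (Hl e He) as [N HN]. exists N. intros n Hn.
  specialize (HN n Hn). erewrite sum_eq. exact HN. intros i _. simpl. unfold Rdiv. ring. Qed.

Lemma kc_Cmod p qr k : 0 < qr ->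
  Cmod (kc p (Defs.RtoC qr) k) = Cmod (poch p k) / (INR (Factorial.fact k) * pochR qr k).
Proof. intros Hq. unfold kc. rewrite poch_R. pose proof (fact_pos k). pose proof (pochR_pos qr k Hq).
  replace (Cdiv (poch p k) (Cmul (Defs.RtoC (INR (Factorial.fact k))) (Defs.RtoC (pochR qr k))))
    with (Cmul (poch p k) (Defs.RtoC (/ (INR (Factorial.fact k) * pochR qr k)))).
  - toC. rewrite Cmod_mult, Cmod_R, Rabs_right. unfold Rdiv; ring. apply Rle_ge, Rlt_le, Rinv_0_lt_compat. nra.
  - toC. rewrite RtoC_inv, RtoC_mult by nra. field. split; apply RtoC_nzC; lra. Qed.

Lemma entire_kc p qr : 1/2 <= qr -> entire (kc p (Defs.RtoC qr)).
Proof. intros Hq rho Hr. set (A := 2 * Cmod p + 1).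
  apply (ex_series_nonneg_le _ (fun k => (A * rho) ^ k / INR (Factorial.fact k))); [|apply ex_series_exp].
  intros k. rewrite kc_Cmod by lra. pose proof (fact_pos k). pose proof (pochR_pos qr k ltac:(lra)).
  pose proof (Cmod_poch_bound p qr k Hq). pose proof (Cmod_ge_0 (poch p k)). pose proof (pow_le rho k Hr).
  split. apply Rmult_le_pos; auto. apply Rdiv_le_0_compat; auto. nra.
  rewrite Rpow_mult_distr. unfold Rdiv.
  replace (Cmod (poch p k) * / (INR (Factorial.fact k) * pochR qr k) * rho ^ k) with
    ((Cmod (poch p k) / pochR qr k) * rho ^ k * / INR (Factorial.fact k)) by (field; lra).
  apply Rmult_le_compat_r. apply Rlt_le, Rinv_0_lt_compat; auto.
  apply Rmult_le_compat_r; auto.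
  apply (Rmult_le_reg_r (pochR qr k)); auto. unfold Rdiv. rewrite Rmult_assoc, Rinv_l by lra. unfold A. lra. Qed.

Lemma Phi_ES p qr z : 1/2 <= qr -> Phi p (Defs.RtoC qr) z = ES (kc p (Defs.RtoC qr)) z.
Proof. intros Hq. unfold Phi. symmetry. apply ES_unique. apply entire_kc; auto.
  apply epsilon_spec. exists (ES (kc p (Defs.RtoC qr)) z). apply ES_cv. apply entire_kc; auto. Qed.

Lemma kc_0 p qr : kc p (Defs.RtoC qr) 0 = C1.
Proof. unfold kc. simpl. toC. field. Qed.

Lemma kc_rec p qr k : 0 < qr ->
  Cmul (kc p (Defs.RtoC qr) (S k)) (Cmul (Defs.RtoC (INR (S k))) (Cadd (Defs.RtoC qr) (Defs.RtoC (INR k)))) =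
  Cmul (kc p (Defs.RtoC qr) k) (Cadd p (Defs.RtoC (INR k))).
Proof. intros Hq. unfold kc. rewrite !poch_R. simpl poch. change (Factorial.fact (S k)) with (S k * Factorial.fact k)%nat.
  rewrite mult_INR. simpl pochR.
  pose proof (fact_pos k). pose proof (pochR_pos qr k Hq). pose proof (pos_INR k).
  toC. rewrite !RtoC_mult. rewrite <- RtoC_plus.
  field. assert (0 < INR (S k)) by (rewrite S_INR; lra). repeat split; apply RtoC_nzC; lra. Qed.

Lemma kummer p qr z : 1/2 <= qr ->
  Cadd (Cmul z (ES (dA (dA (kc p (Defs.RtoC qr)))) z))
       (Csub (Cmul (Csub (Defs.RtoC qr) z) (ES (dA (kc p (Defs.RtoC qr))) z))
             (Cmul p (ES (kc p (Defs.RtoC qr)) z))) = C0.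
Proof. intros Hq. set (a := kc p (Defs.RtoC qr)).
  assert (Ea : entire a) by (apply entire_kc; auto).
  assert (Ed : entire (dA a)) by (apply entire_dA; auto).
  assert (Edd : entire (dA (dA a))) by (apply entire_dA; auto).
  set (c := fun n => Cadd (shR (dA (dA a)) n) (Cadd (Cmul (Defs.RtoC qr) (dA a n))
                      (Cadd (Cmul (Defs.RtoC (-1)) (shR (dA a) n)) (Cmul (Defs.Copp p) (a n))))).
  assert (Hc : ES c z = Cadd (Cmul z (ES (dA (dA a)) z))
       (Csub (Cmul (Csub (Defs.RtoC qr) z) (ES (dA a) z)) (Cmul p (ES a z)))).
  { unfold c. rewrite ES_add, ES_add, ES_add, ES_scal, ES_scal, ES_scal, ES_shR, ES_shR; auto.
    toC. ring.
    all: repeat first [apply entire_add | apply entire_scal | apply entire_shR]; auto. }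
  rewrite <- Hc. rewrite (ES_ext c (fun _ => C0)). apply ES_zero.
  intros [|m]; unfold c; simpl shR.
  - pose proof (kc_rec p qr 0 ltac:(lra)) as R. fold a in R. unfold dA. simpl INR in *.
    transitivity (Csub (Cmul (a 1%nat) (Cmul (Defs.RtoC 1) (Cadd (Defs.RtoC qr) (Defs.RtoC 0)))) (Cmul (a 0%nat) (Cadd p (Defs.RtoC 0)))).
    + toC. ring.
    + rewrite R. toC. ring.
  - pose proof (kc_rec p qr (S m) ltac:(lra)) as R. fold a in R. unfold dA.
    transitivity (Csub (Cmul (a (S (S m))) (Cmul (Defs.RtoC (INR (S (S m)))) (Cadd (Defs.RtoC qr) (Defs.RtoC (INR (S m))))))
                       (Cmul (a (S m)) (Cadd p (Defs.RtoC (INR (S m)))))).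
    + toC. ring.
    + rewrite R. toC. ring.
Qed.

Definition Ef (z : CC) : CC := Cexp (Defs.Copp (Defs.Cdiv (Cmul z z) (Defs.RtoC 2))).
Definition Gf (a : nat -> CC) (z : CC) : CC := ES a (Cmul z z).

Lemma Cderiv_sq g x g' : Cderiv_at g x g' ->
  Cderiv_at (fun t => Cmul (g t) (g t)) x (Cmul (Cmul (Defs.RtoC 2) (g x)) g').
Proof. intros H. eapply Cderiv_eq. apply Cderiv_mul; eauto. toC. ring. Qed.

Lemma Ef_deriv g x g' : Cderiv_at g x g' ->
  Cderiv_at (fun t => Ef (g t)) x (Cmul (Ef (g x)) (Defs.Copp (Cmul (g x) g'))).
Proof. intros H. unfold Ef. eapply Cderiv_eq. apply Cderiv_exp.
  apply Cderiv_opp. unfold Defs.Cdiv. eapply Cderiv_eq. apply Cderiv_mul. apply Cderiv_sq; eauto.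
  apply Cderiv_const. reflexivity.
  f_equal. toC. field. Qed.

Lemma Gf_deriv a g x g' : entire a -> Cderiv_at g x g' ->
  Cderiv_at (fun t => Gf a (g t)) x (Cmul (Cmul (Cmul (Defs.RtoC 2) (g x)) g') (Gf (dA a) (g x))).
Proof. intros Ha H. unfold Gf. eapply Cderiv_eq. apply ES_chain; auto. apply Cderiv_sq; eauto.
  toC. ring. Qed.

Definition W1 a z := Cmul (Ef z) (Gf a z).
Definition W1d a z := Cmul (Ef z) (Csub (Cmul (Cmul (Defs.RtoC 2) z) (Gf (dA a) z)) (Cmul z (Gf a z))).
Definition W1dd a z := Cmul (Ef z) (Cadd (Cmul (Csub (Cmul z z) (Defs.RtoC 1)) (Gf a z))
   (Cadd (Cmul (Csub (Defs.RtoC 2) (Cmul (Defs.RtoC 4) (Cmul z z))) (Gf (dA a) z))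
         (Cmul (Cmul (Defs.RtoC 4) (Cmul z z)) (Gf (dA (dA a)) z)))).
Definition W2 a z := Cmul (Ef z) (Cmul z (Gf a z)).
Definition W2d a z := Cmul (Ef z) (Cadd (Cmul (Csub (Defs.RtoC 1) (Cmul z z)) (Gf a z))
   (Cmul (Cmul (Defs.RtoC 2) (Cmul z z)) (Gf (dA a) z))).
Definition W2dd a z := Cmul (Cmul (Ef z) z) (Cadd (Cmul (Csub (Cmul z z) (Defs.RtoC 3)) (Gf a z))
   (Cadd (Cmul (Csub (Defs.RtoC 6) (Cmul (Defs.RtoC 4) (Cmul z z))) (Gf (dA a) z))
         (Cmul (Cmul (Defs.RtoC 4) (Cmul z z)) (Gf (dA (dA a)) z)))).

Ltac dtac := repeat first
  [ apply Cderiv_mul | apply Cderiv_add | apply Cderiv_sub | apply Cderiv_opp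
  | apply Cderiv_const | apply Ef_deriv | apply Gf_deriv | apply Cderiv_sq | eassumption ].

Lemma W1_deriv a g x g' : entire a -> Cderiv_at g x g' ->
  Cderiv_at (fun t => W1 a (g t)) x (Cmul g' (W1d a (g x))).
Proof. intros Ha H. unfold W1, W1d. eapply Cderiv_eq. dtac. cbv beta. toC. ring. Qed.

Lemma W1d_deriv a g x g' : entire a -> Cderiv_at g x g' ->
  Cderiv_at (fun t => W1d a (g t)) x (Cmul g' (W1dd a (g x))).
Proof. intros Ha H. unfold W1d, W1dd. eapply Cderiv_eq. dtac; try (apply entire_dA; auto). cbv beta. toC. ring. Qed.

Lemma W2_deriv a g x g' : entire a -> Cderiv_at g x g' ->
  Cderiv_at (fun t => W2 a (g t)) x (Cmul g' (W2d a (g x))).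
Proof. intros Ha H. unfold W2, W2d. eapply Cderiv_eq. dtac. cbv beta. toC. ring. Qed.

Lemma W2d_deriv a g x g' : entire a -> Cderiv_at g x g' ->
  Cderiv_at (fun t => W2d a (g t)) x (Cmul g' (W2dd a (g x))).
Proof. intros Ha H. unfold W2d, W2dd. eapply Cderiv_eq. dtac; try (apply entire_dA; auto). cbv beta. toC. ring. Qed.

Lemma RtoC_div' a b : b <> 0 -> Defs.RtoC (a / b) = Defs.Cdiv (Defs.RtoC a) (Defs.RtoC b).
Proof. intros Hb. unfold Defs.Cdiv, Cmul, Defs.Cinv, Defs.RtoC; cbn [fst snd]. f_equal; field; auto. Qed.

Definition p1 la := Defs.Cdiv (Csub (Defs.RtoC 1) la) (Defs.RtoC 4).
Definition p2 la := Defs.Cdiv (Csub (Defs.RtoC 3) la) (Defs.RtoC 4).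
Definition a1 la := kc (p1 la) (Defs.RtoC (1/2)).
Definition a2 la := kc (p2 la) (Defs.RtoC (3/2)).

Lemma entire_a1 la : entire (a1 la).
Proof. apply entire_kc. lra. Qed.
Lemma entire_a2 la : entire (a2 la).
Proof. apply entire_kc. lra. Qed.

Lemma w1_eq la z : w1 la z = W1 (a1 la) z.
Proof. unfold w1, W1, Ef, Gf, a1, p1. rewrite Phi_ES by lra. reflexivity. Qed.
Lemma w2_eq la z : w2 la z = W2 (a2 la) z.
Proof. unfold w2, W2, Ef, Gf, a2, p2. rewrite Phi_ES by lra. reflexivity. Qed.

Lemma weber1 la z : W1dd (a1 la) z = Cmul (Csub (Cmul z z) la) (W1 (a1 la) z).
Proof. pose proof (kummer (p1 la) (1/2) (Cmul z z) ltac:(lra)) as K. fold (a1 la) in K.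
  unfold W1dd, W1, Gf. set (Z := Cmul z z) in *. set (a := a1 la) in *.
  set (Kx := Cadd (Cmul Z (ES (dA (dA a)) Z))
       (Csub (Cmul (Csub (Defs.RtoC (1/2)) Z) (ES (dA a) Z)) (Cmul (p1 la) (ES a Z)))) in K.
  transitivity (Cadd (Cmul (Csub Z la) (Cmul (Ef z) (ES a Z))) (Cmul (Cmul (Defs.RtoC 4) (Ef z)) Kx)).
  - unfold Kx, p1. rewrite RtoC_div' by lra. toC. field.
  - rewrite K. toC. ring. Qed.

Lemma weber2 la z : W2dd (a2 la) z = Cmul (Csub (Cmul z z) la) (W2 (a2 la) z).
Proof. pose proof (kummer (p2 la) (3/2) (Cmul z z) ltac:(lra)) as K. fold (a2 la) in K.
  unfold W2dd, W2, Gf. set (Z := Cmul z z) in *. set (a := a2 la) in *.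
  set (Kx := Cadd (Cmul Z (ES (dA (dA a)) Z))
       (Csub (Cmul (Csub (Defs.RtoC (3/2)) Z) (ES (dA a) Z)) (Cmul (p2 la) (ES a Z)))) in K.
  transitivity (Cadd (Cmul (Csub Z la) (Cmul (Ef z) (Cmul z (ES a Z)))) (Cmul (Cmul (Cmul (Defs.RtoC 4) (Ef z)) z) Kx)).
  - unfold Kx, p2, Z. rewrite RtoC_div' by lra. toC. field.
  - rewrite K. toC. ring. Qed.

Lemma Ef0 : Ef C0 = C1.
Proof. unfold Ef. replace (Defs.Copp (Defs.Cdiv (Cmul C0 C0) (Defs.RtoC 2))) with C0 by (toC; field).
  unfold Cexp, C0, C1; cbn [fst snd]. rewrite exp_0, cos_0, sin_0. f_equal; ring. Qed.

Lemma Gf0 a : entire a -> Gf a C0 = a O.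
Proof. intros Ha. unfold Gf. replace (Cmul C0 C0) with C0 by (toC; ring). apply ES_at0; auto. Qed.

Lemma W1_0 a : entire a -> W1 a C0 = a O.
Proof. intros Ha. unfold W1. rewrite Ef0, Gf0 by auto. toC; ring. Qed.
Lemma W1d_0 a : W1d a C0 = C0.
Proof. unfold W1d. rewrite Ef0. toC; ring. Qed.
Lemma W2_0 a : W2 a C0 = C0.
Proof. unfold W2. rewrite Ef0. toC; ring. Qed.
Lemma W2d_0 a : entire a -> W2d a C0 = a O.
Proof. intros Ha. unfold W2d. rewrite Ef0, Gf0 by auto. toC; ring. Qed.

Ltac fside := repeat split; try assumption; try (apply RtoC_nzC; lra).

Lemma S_nz b20 b11 b02 : b20 <> C0 -> Delta2 b20 b11 b02 <> C0 ->
  Defs.Copp (Defs.Cdiv (Delta2 b20 b11 b02) (Cmul b20 b20)) <> C0.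
Proof. intros H1 H2 E. apply H2. set (D := Delta2 b20 b11 b02) in *.
  replace D with (Defs.Copp (Cmul (Defs.Copp (Defs.Cdiv D (Cmul b20 b20))) (Cmul b20 b20))).
  rewrite E. toC. ring. toC. field. auto. Qed.

Lemma F1 b20 b11 b02 b10 b01 b00 X : b20 <> C0 -> Delta2 b20 b11 b02 <> C0 ->
  let D2 := Delta2 b20 b11 b02 in let D1 := Delta1 b20 b11 b10 b01 in let D0 := Delta0 b20 b11 b10 b00 in
  let Cc := Cpow (Defs.Copp (Defs.Cdiv D2 (Cmul (Defs.RtoC 4) (Cmul b20 b20)))) (Defs.RtoC (1/4)) in
  let Dd := Defs.Cdiv D1 (Cmul (Defs.RtoC 2) D2) in
  let la := lam b20 b11 b02 b10 b01 b00 in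
  Cmul (Cmul Cc Cc) (Csub (Cmul (Cmul Cc (Cadd X Dd)) (Cmul Cc (Cadd X Dd))) la) =
  Cadd (Cmul (Defs.Copp (Defs.Cdiv D2 (Cmul (Defs.RtoC 4) (Cmul b20 b20)))) (Cmul (Cadd X Dd) (Cadd X Dd)))
       (Defs.Cdiv (Csub (Cmul D1 D1) (Cmul (Defs.RtoC 4) (Cmul D2 D0))) (Cmul (Defs.RtoC 16) (Cmul D2 (Cmul b20 b20)))).
Proof. intros Hb HD D2 D1 D0 Cc Dd la.
  pose proof (S_nz b20 b11 b02 Hb HD) as HS. fold D2 in HS.
  set (S := Defs.Copp (Defs.Cdiv D2 (Cmul b20 b20))) in *.
  assert (S4 : Defs.Copp (Defs.Cdiv D2 (Cmul (Defs.RtoC 4) (Cmul b20 b20))) = Cmul (Defs.RtoC (1/4)) S).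
  { unfold S. rewrite RtoC_div' by lra. toC. field. fside. }
  unfold Cc. rewrite S4. destruct (key_pow S HS) as [K4 K2].
  set (C := Cpow (Cmul (Defs.RtoC (1/4)) S) (Defs.RtoC (1/4))) in *.
  set (P := Cpow S (Defs.RtoC (-3/2))) in *.
  assert (Hla : la = Cmul (Defs.RtoC (1/8)) (Cmul P (Defs.Cdiv (Csub (Cmul D1 D1) (Cmul (Defs.RtoC 4) (Cmul D2 D0))) (Cpown b20 4)))) by reflexivity.
  rewrite Hla. clearbody la.
  transitivity (Cadd (Cmul (Cmul (Cmul C C) (Cmul C C)) (Cmul (Cadd X Dd) (Cadd X Dd)))
     (Defs.Copp (Cmul (Cmul (Cmul (Cmul C C) P) S) (Defs.Cdiv (Csub (Cmul D1 D1) (Cmul (Defs.RtoC 4) (Cmul D2 D0))) (Cmul (Defs.RtoC 8) (Cmul S (Cpown b20 4))))))).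
  - rewrite RtoC_div' by lra. simpl Cpown. toC. field. fside.
  - rewrite K4, K2. unfold S. rewrite !RtoC_div' by lra. simpl Cpown. toC. field. fside.
Qed.

Definition phi1 (b20 b11 b10 : CC) (x : R) : CC :=
  Defs.Copp (Cmul (Defs.Cdiv Ci (Cmul (Defs.RtoC 4) b20))
    (Cadd (Cmul b11 (Defs.RtoC (2 * x))) (Cmul (Defs.RtoC 2) b10))).
Definition phi2 (b20 b11 : CC) : CC :=
  Defs.Copp (Cmul (Defs.Cdiv Ci (Cmul (Defs.RtoC 4) b20)) (Cmul b11 (Defs.RtoC 2))).

Lemma prefac_deriv b20 b11 b10 x :
  Cderiv_at (prefac b20 b11 b10) x (Cmul (prefac b20 b11 b10 x) (phi1 b20 b11 b10 x)).
Proof. unfold prefac. apply Cderiv_exp. unfold phi1.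
  assert (HX2 : derivable_pt_lim (fun t => t ^ 2) x (2 * x)) by (eapply lim_eq; [apply derivable_pt_lim_pow| simpl; ring]).
  apply Cderiv_opp. eapply Cderiv_eq. apply Cderiv_scal. apply Cderiv_add.
  apply Cderiv_scal. apply (Cderiv_RtoC (fun t => t ^ 2)). exact HX2.
  apply Cderiv_scal. apply Cderiv_scal. apply Cderiv_id. toC. ring. Qed.

Lemma phi1_deriv b20 b11 b10 x : Cderiv_at (phi1 b20 b11 b10) x (phi2 b20 b11).
Proof. unfold phi1, phi2. apply Cderiv_opp. eapply Cderiv_eq. apply Cderiv_scal. apply Cderiv_add.
  apply Cderiv_scal. apply (Cderiv_RtoC (fun t => 2 * t) x 2). eapply lim_eq.
  apply (derivable_pt_lim_scal (fun t => t) 2 x 1). apply derivable_pt_lim_id. ring.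
  apply Cderiv_const. toC. ring. Qed.

Lemma zarg_deriv b20 b11 b02 b10 b01 x :
  Cderiv_at (zarg b20 b11 b02 b10 b01) x
    (Cpow (Defs.Copp (Defs.Cdiv (Delta2 b20 b11 b02) (Cmul (Defs.RtoC 4) (Cmul b20 b20)))) (Defs.RtoC (1/4))).
Proof. unfold zarg. cbv zeta. eapply Cderiv_eq. apply Cderiv_scal. apply Cderiv_add. apply Cderiv_id.
  apply Cderiv_const. toC. ring. Qed.

Lemma Ci2 : Cadd (Cmul Ci Ci) C1 = C0.
Proof. unfold Cadd, Cmul, Ci, C1, C0; cbn [fst snd]. f_equal; ring. Qed.

Lemma solves_gen b20 b11 b02 b10 b01 b00 (w wd wdd : CC -> CC) :
  b20 <> C0 -> Delta2 b20 b11 b02 <> C0 ->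
  (forall g x g', Cderiv_at g x g' -> Cderiv_at (fun t => w (g t)) x (Cmul g' (wd (g x)))) ->
  (forall g x g', Cderiv_at g x g' -> Cderiv_at (fun t => wd (g t)) x (Cmul g' (wdd (g x)))) ->
  (forall z, wdd z = Cmul (Csub (Cmul z z) (lam b20 b11 b02 b10 b01 b00)) (w z)) ->
  solves_B b20 b11 b02 b10 b01 b00 (fun x => Cmul (prefac b20 b11 b10 x) (w (zarg b20 b11 b02 b10 b01 x))).
Proof. intros Hb HD Hw Hwd Hweb.
  set (Cc := Cpow (Defs.Copp (Defs.Cdiv (Delta2 b20 b11 b02) (Cmul (Defs.RtoC 4) (Cmul b20 b20)))) (Defs.RtoC (1/4))).
  set (z := zarg b20 b11 b02 b10 b01).
  set (P := prefac b20 b11 b10). set (f1 := phi1 b20 b11 b10). set (f2 := phi2 b20 b11).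
  exists (fun x => Cmul (P x) (Cadd (Cmul (f1 x) (w (z x))) (Cmul Cc (wd (z x))))).
  exists (fun x => Cmul (P x) (Cadd (Cmul (f1 x) (Cadd (Cmul (f1 x) (w (z x))) (Cmul Cc (wd (z x)))))
                     (Cadd (Cmul f2 (w (z x))) (Cadd (Cmul (f1 x) (Cmul Cc (wd (z x)))) (Cmul (Cmul Cc Cc) (wdd (z x))))))).
  intros x. pose proof (zarg_deriv b20 b11 b02 b10 b01 x) as Hz. fold Cc z in Hz.
  pose proof (prefac_deriv b20 b11 b10 x) as HP. fold P f1 in HP.
  pose proof (phi1_deriv b20 b11 b10 x) as Hf. fold f1 f2 in Hf.
  split; [|split].
  - eapply Cderiv_eq. apply Cderiv_mul. apply HP. apply Hw. apply Hz. toC. ring.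
  - eapply Cderiv_eq. apply Cderiv_mul. apply HP. apply Cderiv_add. apply Cderiv_mul. apply Hf. apply Hw. apply Hz.
    apply Cderiv_scal. apply Hwd. apply Hz. toC. ring.
  - unfold B_apply. cbv beta. rewrite Hweb.
    pose proof (F1 b20 b11 b02 b10 b01 b00 (Defs.RtoC x) Hb HD) as HF. cbv zeta in HF. fold Cc in HF.
    assert (Ez : z x = Cmul Cc (Cadd (Defs.RtoC x) (Defs.Cdiv (Delta1 b20 b11 b10 b01) (Cmul (Defs.RtoC 2) (Delta2 b20 b11 b02))))) by reflexivity.
    rewrite Ez in *. set (v := w _). set (W := wd _).
    set (la := lam b20 b11 b02 b10 b01 b00) in *.
    set (ZZ := Cmul (Cmul Cc _) (Cmul Cc _)) in *.
    replace (Cmul (Cmul Cc Cc) (Cmul (Csub ZZ la) v)) with (Cmul (Cmul (Cmul Cc Cc) (Csub ZZ la)) v) by (toC; ring).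
    rewrite HF. clear HF. clearbody v W.
    unfold f1, f2, phi1, phi2, P. set (PP := prefac b20 b11 b10 x). set (CW := Cmul Cc W).
    unfold Delta0, Delta1, Delta2.
    transitivity (Cmul (Cadd (Cmul Ci Ci) C1)
       (Defs.Cdiv (Cmul (Cmul PP v) (Cmul (Cadd (Cmul b11 (Defs.RtoC x)) b10) (Cadd (Cmul b11 (Defs.RtoC x)) b10))) (Cmul (Defs.RtoC 4) b20))).
    + rewrite RtoC_mult'. toC. field. split; [exact Hb|]. cbv beta. unfold Delta2 in HD. toC. exact HD.
    + rewrite Ci2. toC. ring.
Qed.

Lemma u1_eq b20 b11 b02 b10 b01 b00 : u_sol1 b20 b11 b02 b10 b01 b00 =
  (fun x => Cmul (prefac b20 b11 b10 x) (W1 (a1 (lam b20 b11 b02 b10 b01 b00)) (zarg b20 b11 b02 b10 b01 x))).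
Proof. apply functional_extensionality; intros x. unfold u_sol1. rewrite w1_eq. reflexivity. Qed.
Lemma u2_eq b20 b11 b02 b10 b01 b00 : u_sol2 b20 b11 b02 b10 b01 b00 =
  (fun x => Cmul (prefac b20 b11 b10 x) (W2 (a2 (lam b20 b11 b02 b10 b01 b00)) (zarg b20 b11 b02 b10 b01 x))).
Proof. apply functional_extensionality; intros x. unfold u_sol2. rewrite w2_eq. reflexivity. Qed.

Lemma solves1 b20 b11 b02 b10 b01 b00 : b20 <> C0 -> Delta2 b20 b11 b02 <> C0 ->
  solves_B b20 b11 b02 b10 b01 b00 (u_sol1 b20 b11 b02 b10 b01 b00).
Proof. intros Hb HD. rewrite u1_eq. apply (solves_gen _ _ _ _ _ _ _ (W1d (a1 (lam b20 b11 b02 b10 b01 b00))) (W1dd (a1 (lam b20 b11 b02 b10 b01 b00)))); auto.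
  - intros; apply W1_deriv; auto; apply entire_a1.
  - intros; apply W1d_deriv; auto; apply entire_a1.
  - intros; apply weber1. Qed.

Lemma solves2 b20 b11 b02 b10 b01 b00 : b20 <> C0 -> Delta2 b20 b11 b02 <> C0 ->
  solves_B b20 b11 b02 b10 b01 b00 (u_sol2 b20 b11 b02 b10 b01 b00).
Proof. intros Hb HD. rewrite u2_eq. apply (solves_gen _ _ _ _ _ _ _ (W2d (a2 (lam b20 b11 b02 b10 b01 b00))) (W2dd (a2 (lam b20 b11 b02 b10 b01 b00)))); auto.
  - intros; apply W2_deriv; auto; apply entire_a2.
  - intros; apply W2d_deriv; auto; apply entire_a2.
  - intros; apply weber2. Qed.

Lemma deriv0_const (f : R -> R) : (forall t, derivable_pt_lim f t 0) -> f 1 = f 0.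
Proof. intros H. destruct (MVT_cor2 f (fun _ => 0) 0 1 ltac:(lra)) as [c [Hc _]].
  intros; auto. lra. Qed.

Lemma wronskian la z0 :
  Csub (Cmul (W1 (a1 la) z0) (W2d (a2 la) z0)) (Cmul (W1d (a1 la) z0) (W2 (a2 la) z0)) = C1.
Proof. set (g := fun t => Cmul (Defs.RtoC t) z0).
  set (F := fun t => Csub (Cmul (W1 (a1 la) (g t)) (W2d (a2 la) (g t))) (Cmul (W1d (a1 la) (g t)) (W2 (a2 la) (g t)))).
  assert (Hg : forall t, Cderiv_at g t z0).
  { intros t. unfold g. eapply Cderiv_eq. apply (Cderiv_mul (fun t => Defs.RtoC t) (fun _ => z0)). apply Cderiv_id. apply Cderiv_const. toC. ring. }
  assert (HF : forall t, Cderiv_at F t C0).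
  { intros t. unfold F. eapply Cderiv_eq. apply Cderiv_sub; apply Cderiv_mul.
    apply W1_deriv. apply entire_a1. apply Hg. apply W2d_deriv. apply entire_a2. apply Hg.
    apply W1d_deriv. apply entire_a1. apply Hg. apply W2_deriv. apply entire_a2. apply Hg.
    rewrite weber1, weber2. toC. ring. }
  assert (E1 : F 1 = F 0).
  { destruct (F 1) as [f1 s1] eqn:E1'. destruct (F 0) as [f0 s0] eqn:E0'.
    assert (fst (F 1) = fst (F 0)) by (apply (deriv0_const (fun t => fst (F t))); intros t; apply (HF t)).
    assert (snd (F 1) = snd (F 0)) by (apply (deriv0_const (fun t => snd (F t))); intros t; apply (HF t)).
    rewrite E1', E0' in *. simpl in *. subst. reflexivity. }
  unfold F in E1. replace (g 1) with z0 in E1 by (unfold g; toC; ring).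
  replace (g 0) with C0 in E1 by (unfold g; toC; ring).
  rewrite E1. rewrite W1_0, W2d_0, W1d_0, W2_0 by (apply entire_a1 || apply entire_a2).
  unfold a1, a2. rewrite !kc_0. toC. ring. Qed.

Lemma lin_indep b20 b11 b02 b10 b01 b00 : b20 <> C0 -> Delta2 b20 b11 b02 <> C0 ->
  lin_indep2 (u_sol1 b20 b11 b02 b10 b01 b00) (u_sol2 b20 b11 b02 b10 b01 b00).
Proof. intros Hb HD. rewrite u1_eq, u2_eq. intros c1 c2 H. cbv beta in H.
  set (la := lam b20 b11 b02 b10 b01 b00) in *.
  set (z := zarg b20 b11 b02 b10 b01) in *.
  set (Cc := Cpow (Defs.Copp (Defs.Cdiv (Delta2 b20 b11 b02) (Cmul (Defs.RtoC 4) (Cmul b20 b20)))) (Defs.RtoC (1/4))).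
  assert (Hz : forall x, Cderiv_at z x Cc) by (intros; apply zarg_deriv).
  assert (H0 : forall x, Cadd (Cmul c1 (W1 (a1 la) (z x))) (Cmul c2 (W2 (a2 la) (z x))) = C0).
  { intros x. specialize (H x). assert (HP : prefac b20 b11 b10 x <> C0) by (unfold prefac; apply Cexp_nz).
    set (P := prefac b20 b11 b10 x) in *.
    set (y := Cadd (Cmul c1 (W1 (a1 la) (z x))) (Cmul c2 (W2 (a2 la) (z x)))).
    transitivity (Defs.Cdiv (Cadd (Cmul c1 (Cmul P (W1 (a1 la) (z x)))) (Cmul c2 (Cmul P (W2 (a2 la) (z x))))) P).
    - unfold y. toC. field. auto.
    - rewrite H. toC. field. auto. }
  assert (HD1 : Cderiv_at (fun x => Cadd (Cmul c1 (W1 (a1 la) (z x))) (Cmul c2 (W2 (a2 la) (z x)))) 0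
     (Cadd (Cmul c1 (Cmul Cc (W1d (a1 la) (z 0)))) (Cmul c2 (Cmul Cc (W2d (a2 la) (z 0)))))).
  { apply Cderiv_add; apply Cderiv_scal. apply W1_deriv. apply entire_a1. apply Hz.
    apply W2_deriv. apply entire_a2. apply Hz. }
  assert (HD0 : Cderiv_at (fun x => Cadd (Cmul c1 (W1 (a1 la) (z x))) (Cmul c2 (W2 (a2 la) (z x)))) 0 C0).
  { eapply Cderiv_ext. 2: apply (Cderiv_const C0). intros t. simpl. rewrite H0. reflexivity. }
  pose proof (Cderiv_unique _ _ _ _ HD1 HD0) as E.
  assert (HC : Cc <> C0) by (unfold Cc, Cpow; apply Cexp_nz).
  assert (E' : Cadd (Cmul c1 (W1d (a1 la) (z 0))) (Cmul c2 (W2d (a2 la) (z 0))) = C0).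
  { transitivity (Defs.Cdiv (Cadd (Cmul c1 (Cmul Cc (W1d (a1 la) (z 0)))) (Cmul c2 (Cmul Cc (W2d (a2 la) (z 0))))) Cc).
    toC; field; auto. rewrite E. toC; field; auto. }
  specialize (H0 0). pose proof (wronskian la (z 0)) as Wr.
  set (A1 := W1 (a1 la) (z 0)) in *. set (A2 := W2 (a2 la) (z 0)) in *.
  set (B1 := W1d (a1 la) (z 0)) in *. set (B2 := W2d (a2 la) (z 0)) in *.
  split.
  - transitivity (Csub (Cmul B2 (Cadd (Cmul c1 A1) (Cmul c2 A2))) (Cmul A2 (Cadd (Cmul c1 B1) (Cmul c2 B2)))).
    + transitivity (Cmul c1 (Csub (Cmul A1 B2) (Cmul B1 A2))). rewrite Wr. toC; ring. toC; ring.
    + rewrite H0, E'. toC; ring.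
  - transitivity (Csub (Cmul A1 (Cadd (Cmul c1 B1) (Cmul c2 B2))) (Cmul B1 (Cadd (Cmul c1 A1) (Cmul c2 A2)))).
    + transitivity (Cmul c2 (Csub (Cmul A1 B2) (Cmul B1 A2))). rewrite Wr. toC; ring. toC; ring.
    + rewrite H0, E'. toC; ring.
Qed.

Definition nxt (a0 a1c c0 c1 c2 : CC) (m : nat) (p q r s : CC) : CC :=
  Defs.Cdiv (Cadd (Cmul a0 (Cmul (Defs.RtoC (INR (S m))) s))
           (Cadd (Cmul (Cadd (Cmul a1c (Defs.RtoC (INR m))) c0) r) (Cadd (Cmul c1 q) (Cmul c2 p))))
       (Cmul (Defs.RtoC (INR (S m))) (Defs.RtoC (INR (S (S m))))).

Fixpoint st (a0 a1c c0 c1 c2 y0 y1 : CC) (n : nat) : CC * CC * CC * CC :=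
  match n with
  | O => (C0, C0, y0, y1)
  | S m => match st a0 a1c c0 c1 c2 y0 y1 m with
           | (p, q, r, s) => (q, r, s, nxt a0 a1c c0 c1 c2 m p q r s) end
  end.

Definition zs a0 a1c c0 c1 c2 y0 y1 n := fst (fst (fst (st a0 a1c c0 c1 c2 y0 y1 n))).

Lemma zs_shape a0 a1c c0 c1 c2 y0 y1 n :
  let z := zs a0 a1c c0 c1 c2 y0 y1 in
  st a0 a1c c0 c1 c2 y0 y1 n = (z n, z (S n), z (S (S n)), z (S (S (S n)))).
Proof. intros z. unfold z, zs. simpl.
  remember (st a0 a1c c0 c1 c2 y0 y1 n) as X. destruct X as [[[p q] r] s]. simpl. reflexivity. Qed.

Lemma zs_rec a0 a1c c0 c1 c2 y0 y1 m :
  let z := zs a0 a1c c0 c1 c2 y0 y1 in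
  z (S (S (S (S m)))) = nxt a0 a1c c0 c1 c2 m (z m) (z (S m)) (z (S (S m))) (z (S (S (S m)))).
Proof. intros z. pose proof (zs_shape a0 a1c c0 c1 c2 y0 y1 m) as Hs. fold z in Hs.
  unfold z at 1, zs. simpl st. rewrite Hs. simpl. reflexivity. Qed.

Lemma sum_ge_term (f : nat -> R) k N : (forall n, 0 <= f n) -> (k <= N)%nat -> f k <= sum_f_R0 f N.
Proof. intros Hf Hk. induction N.
  - assert (k = 0)%nat by lia. subst. simpl. lra.
  - destruct (Nat.eq_dec k (S N)). subst. simpl. pose proof (cond_pos_sum f N ltac:(intros; apply Hf)). lra.
    simpl. pose proof (Hf (S N)). assert (f k <= sum_f_R0 f N) by (apply IHN; lia). lra. Qed.

Lemma cond_pos_sum' f N : (forall n, 0 <= f n) -> 0 <= sum_f_R0 f N.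
Proof. intros H. induction N; simpl; auto. pose proof (H (S N)); lra. Qed.

Lemma step_bound (A0 A1 C0' C1 C2 L B m z0 z1 z2 z3 z4 : R) :
  0 <= A0 -> 0 <= A1 -> 0 <= C0' -> 0 <= C1 -> 0 <= C2 -> 1 <= L -> 0 <= B ->
  0 <= z0 -> 0 <= z1 -> 0 <= z2 -> 0 <= z3 -> 0 <= m ->
  z0 * L ^ 0 <= B -> z1 * L <= B -> z2 * L ^ 2 <= B -> z3 * L ^ 3 <= B ->
  A0 * L + A1 * L ^ 2 + C0' * L ^ 2 + C1 * L ^ 3 + C2 * L ^ 4 <= m ->
  z4 * ((m + 1) * (m + 2)) <= A0 * (m + 1) * z3 + (A1 * m + C0') * z2 + C1 * z1 + C2 * z0 ->
  z4 * L ^ 4 <= B.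
Proof. intros. simpl pow in *. rewrite !Rmult_1_r in *.
  assert (E: z4 * (L*(L*(L*L))) * ((m + 1) * (m + 2)) <= B * ((m + 1) * (m + 2))).
  { apply Rle_trans with ((A0 * (m + 1) * z3 + (A1 * m + C0') * z2 + C1 * z1 + C2 * z0) * (L*(L*(L*L)))).
    { replace (z4 * (L*(L*(L*L))) * ((m + 1) * (m + 2))) with ((z4 * ((m + 1) * (m + 2))) * (L*(L*(L*L)))) by ring.
      apply Rmult_le_compat_r; auto. assert (0 <= L*L) by nra. assert (0 <= L*(L*L)) by nra. nra. }
    replace ((A0 * (m + 1) * z3 + (A1 * m + C0') * z2 + C1 * z1 + C2 * z0) * (L*(L*(L*L)))) with
      (A0 * L * (m + 1) * (z3 * (L*(L*L))) + (A1 * m + C0') * (L*L) * (z2 * (L*L)) + C1 * (L*(L*L)) * (z1 * L) + C2 * (L*(L*(L*L))) * z0) by ring.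
    assert (HL2 : 1 <= L * L) by nra. assert (HL3 : 1 <= L * (L * L)) by nra. assert (HL4 : 1 <= L * (L * (L * L))) by nra.
    apply Rle_trans with (A0 * L * (m + 1) * B + (A1 * m + C0') * (L*L) * B + C1 * (L*(L*L)) * B + C2 * (L*(L*(L*L))) * B).
    { assert (P1 : 0 <= A0 * L * (m+1)) by (repeat apply Rmult_le_pos; lra).
      assert (P2 : 0 <= (A1*m + C0') * (L*L)) by (apply Rmult_le_pos; nra).
      assert (P3 : 0 <= C1 * (L*(L*L))) by (apply Rmult_le_pos; nra).
      assert (P4 : 0 <= C2 * (L*(L*(L*L)))) by (apply Rmult_le_pos; nra).
      assert (A0 * L * (m+1) * (z3 * (L*(L*L))) <= A0 * L * (m+1) * B) by (apply Rmult_le_compat_l; auto).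
      assert ((A1*m + C0') * (L*L) * (z2 * (L*L)) <= (A1*m + C0') * (L*L) * B) by (apply Rmult_le_compat_l; auto).
      assert (C1 * (L*(L*L)) * (z1 * L) <= C1 * (L*(L*L)) * B) by (apply Rmult_le_compat_l; auto).
      assert (C2 * (L*(L*(L*L))) * z0 <= C2 * (L*(L*(L*L))) * B) by (apply Rmult_le_compat_l; auto).
      lra. }
    replace (A0 * L * (m + 1) * B + (A1 * m + C0') * (L*L) * B + C1 * (L*(L*L)) * B + C2 * (L*(L*(L*L))) * B) with
      (B * (A0 * L * (m + 1) + (A1 * m + C0') * (L*L) + C1 * (L*(L*L)) + C2 * (L*(L*(L*L))))) by ring.
    apply Rmult_le_compat_l; auto.
    assert (A1 * m * (L * L) <= A1 * (L * L) * (m + 1)).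
    { assert (0 <= A1 * (L*L)) by nra. nra. }
    assert (C0' * (L*L) + C1 * (L*(L*L)) + C2 * (L*(L*(L*L))) <= (C0' * (L*L) + C1 * (L*(L*L)) + C2 * (L*(L*(L*L)))) * (m + 1)).
    { assert (0 <= C0' * (L*L) + C1 * (L*(L*L)) + C2 * (L*(L*(L*L)))) by (repeat apply Rplus_le_le_0_compat; apply Rmult_le_pos; lra). nra. }
    assert ((A0 * L + A1 * (L * L) + C0' * (L * L) + C1 * (L * (L * L)) + C2 * (L * (L * (L * L)))) * (m + 1) <= m * (m + 1)) by nra.
    nra. }
  assert (0 < (m + 1) * (m + 2)) by nra.
  apply (Rmult_le_reg_r ((m + 1) * (m + 2))); auto. Qed.

Lemma Cmod_nat n : Cmod (Defs.RtoC (INR n)) = INR n.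
Proof. rewrite Cmod_RtoC. apply Rabs_right. apply Rle_ge, pos_INR. Qed.

Lemma zs_rec_ineq a0 a1c c0 c1 c2 y0 y1 m :
  let z := zs a0 a1c c0 c1 c2 y0 y1 in
  Cmod (z (S (S (S (S m))))) * ((INR m + 1) * (INR m + 2)) <=
  Cmod a0 * (INR m + 1) * Cmod (z (S (S (S m)))) + (Cmod a1c * INR m + Cmod c0) * Cmod (z (S (S m)))
  + Cmod c1 * Cmod (z (S m)) + Cmod c2 * Cmod (z m).
Proof. intros z.
  assert (R : z (S (S (S (S m)))) = nxt a0 a1c c0 c1 c2 m (z m) (z (S m)) (z (S (S m))) (z (S (S (S m))))) by apply zs_rec.
  rewrite R. unfold nxt.
  set (Nn := Cadd (Cmul a0 (Cmul (Defs.RtoC (INR (S m))) (z (S (S (S m))))))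
           (Cadd (Cmul (Cadd (Cmul a1c (Defs.RtoC (INR m))) c0) (z (S (S m)))) (Cadd (Cmul c1 (z (S m))) (Cmul c2 (z m))))).
  pose proof (pos_INR m).
  assert (E : Cmod (Defs.Cdiv Nn (Cmul (Defs.RtoC (INR (S m))) (Defs.RtoC (INR (S (S m)))))) * ((INR m + 1) * (INR m + 2)) = Cmod Nn).
  { rewrite Cdiv_e, Cmul_e, RtoC_e. rewrite Cmod_div. rewrite Cmod_mult, !Cmod_R, !Rabs_right.
    rewrite !S_INR. field. nra. 1,2: rewrite ?S_INR; lra.
    rewrite !S_INR. intros HH. apply (f_equal fst) in HH. simpl in HH. nra. }
  rewrite E. unfold Nn. toC.
  set (z0 := z m) in *. set (z1 := z (S m)) in *. set (z2 := z (S (S m))) in *. set (z3 := z (S (S (S m)))) in *.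
  pose proof (Cmod_triangle (a0 * (INR (S m) * z3))%C (((a1c * INR m + c0) * z2) + (c1 * z1 + c2 * z0))%C) as T1.
  pose proof (Cmod_triangle ((a1c * INR m + c0) * z2)%C (c1 * z1 + c2 * z0)%C) as T2.
  pose proof (Cmod_triangle (c1 * z1)%C (c2 * z0)%C) as T3.
  rewrite !Cmod_mult in T1. rewrite !Cmod_mult in T2. rewrite !Cmod_mult in T3. rewrite Cmod_R, Rabs_right, S_INR in T1 by (rewrite S_INR; lra).
  pose proof (Cmod_triangle (a1c * INR m)%C c0) as T4. rewrite Cmod_mult, Cmod_R, Rabs_right in T4 by lra.
  assert (Cmod (a1c * INR m + c0)%C * Cmod z2 <= (Cmod a1c * INR m + Cmod c0) * Cmod z2)
    by (apply Rmult_le_compat_r; [apply Cmod_ge_0|lra]).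
  rewrite ?S_INR. lra.
Qed.

Lemma zs_bounded a0 a1c c0 c1 c2 y0 y1 L : 1 <= L ->
  exists B, 0 <= B /\ forall n, Cmod (zs a0 a1c c0 c1 c2 y0 y1 n) * L ^ n <= B.
Proof. intros HL. set (z := zs a0 a1c c0 c1 c2 y0 y1).
  set (Kc := Cmod a0 * L + Cmod a1c * L ^ 2 + Cmod c0 * L ^ 2 + Cmod c1 * L ^ 3 + Cmod c2 * L ^ 4).
  destruct (INR_unbounded Kc) as [N0 HN0].
  set (T := fun k => Cmod (z k) * L ^ k).
  assert (HT : forall k, 0 <= T k) by (intros; unfold T; apply Rmult_le_pos; [apply Cmod_ge_0|apply pow_le; lra]).
  set (B := sum_f_R0 T (N0 + 3)).
  exists B. split. apply cond_pos_sum'; auto.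
  assert (Hall : forall n k, (k <= n)%nat -> T k <= B).
  { induction n.
    - intros k Hk. apply sum_ge_term; auto. lia.
    - intros k Hk. destruct (Nat.eq_dec k (S n)); [|apply IHn; lia]. subst k.
      destruct (Nat.le_gt_cases (S n) (N0 + 3)). apply sum_ge_term; auto.
      destruct n as [|[|[|n]]]; try lia.
      set (m := n).
      pose proof (zs_rec_ineq a0 a1c c0 c1 c2 y0 y1 m) as Hr. fold z in Hr.
      assert (Hm : Kc <= INR m). { apply Rle_trans with (INR N0). lra. apply le_INR. lia. }
      pose proof (pos_INR m).
      assert (HLm : 0 < L ^ m) by (apply pow_lt; lra).
      pose proof (step_bound (Cmod a0) (Cmod a1c) (Cmod c0) (Cmod c1) (Cmod c2) L B (INR m)
        (Cmod (z m) * L ^ m) (Cmod (z (S m)) * L ^ m) (Cmod (z (S (S m))) * L ^ m) (Cmod (z (S (S (S m)))) * L ^ m)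
        (Cmod (z (S (S (S (S m))))) * L ^ m)) as SB.
      assert (G0 : Cmod (z m) * L ^ m * L ^ 0 <= B).
      { rewrite Rmult_assoc, <- pow_add. replace (m + 0)%nat with m by lia. apply (IHn m). lia. }
      assert (G1 : Cmod (z (S m)) * L ^ m * L <= B).
      { rewrite Rmult_assoc. replace (L ^ m * L) with (L ^ S m) by (simpl; ring). apply (IHn (S m)). lia. }
      assert (G2 : Cmod (z (S (S m))) * L ^ m * L ^ 2 <= B).
      { rewrite Rmult_assoc, <- pow_add. replace (m + 2)%nat with (S (S m)) by lia. apply (IHn (S (S m))). lia. }
      assert (G3 : Cmod (z (S (S (S m)))) * L ^ m * L ^ 3 <= B).
      { rewrite Rmult_assoc, <- pow_add. replace (m + 3)%nat with (S (S (S m))) by lia. apply (IHn (S (S (S m)))). lia. }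
      assert (G4 : Cmod (z (S (S (S (S m))))) * L ^ m * ((INR m + 1) * (INR m + 2)) <=
        Cmod a0 * (INR m + 1) * (Cmod (z (S (S (S m)))) * L ^ m) + (Cmod a1c * INR m + Cmod c0) * (Cmod (z (S (S m))) * L ^ m) +
        Cmod c1 * (Cmod (z (S m)) * L ^ m) + Cmod c2 * (Cmod (z m) * L ^ m)).
      { apply (Rmult_le_compat_r (L ^ m)) in Hr; [|lra].
        replace (Cmod (z (S (S (S (S m))))) * L ^ m * ((INR m + 1) * (INR m + 2))) with
          (Cmod (z (S (S (S (S m))))) * ((INR m + 1) * (INR m + 2)) * L ^ m) by ring.
        eapply Rle_trans. exact Hr. right. ring. }
      assert (HB0 : 0 <= B) by (apply cond_pos_sum'; auto).
      unfold T. replace (L ^ S (S (S (S m)))) with (L ^ m * L ^ 4) by (rewrite <- pow_add; f_equal; lia).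
      rewrite <- Rmult_assoc. apply SB; clear SB; auto; try apply Cmod_ge_0; try (apply Rmult_le_pos; [apply Cmod_ge_0|lra]).
      }
  intros n. apply (Hall n n). lia. Qed.

Lemma entire_zs a0 a1c c0 c1 c2 y0 y1 : entire (zs a0 a1c c0 c1 c2 y0 y1).
Proof. intros rho Hr. set (L := 2 * rho + 1).
  destruct (zs_bounded a0 a1c c0 c1 c2 y0 y1 L ltac:(unfold L; lra)) as [B [HB HBn]].
  apply (ex_series_nonneg_le _ (fun n => scal B ((rho / L) ^ n))).
  - intros n. change (scal B ?x) with (B * x).
    assert (HL : 0 < L) by (unfold L; lra).
    assert (E : rho ^ n = L ^ n * (rho / L) ^ n) by (rewrite <- Rpow_mult_distr; f_equal; field; lra).
    pose proof (HBn n). assert (0 <= (rho / L) ^ n) by (apply pow_le; apply Rdiv_le_0_compat; lra).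
    split. apply Rmult_le_pos. apply Cmod_ge_0. apply pow_le; auto.
    rewrite E, <- Rmult_assoc. apply Rmult_le_compat_r; auto.
  - apply (@ex_series_scal R_AbsRing R_NormedModule). apply ex_series_geom.
    assert (HL : 0 < L) by (unfold L; lra).
    rewrite Rabs_right. apply (Rmult_lt_reg_r L); auto. unfold Rdiv. rewrite Rmult_assoc, Rinv_l by lra. unfold L; lra.
    apply Rle_ge, Rdiv_le_0_compat; lra.
Qed.

Definition ys a0 a1c c0 c1 c2 y0 y1 k := zs a0 a1c c0 c1 c2 y0 y1 (S (S k)).

Lemma entire_ys a0 a1c c0 c1 c2 y0 y1 : entire (ys a0 a1c c0 c1 c2 y0 y1).
Proof. intros rho Hr. pose proof (entire_zs a0 a1c c0 c1 c2 y0 y1 (rho + 1) ltac:(lra)) as H.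
  apply (ex_series_incr_n _ 2) in H.
  eapply (ex_series_nonneg_le _ _); [|exact H]. intros k. unfold ys. change (2 + k)%nat with (S (S k)).
  pose proof (Cmod_ge_0 (zs a0 a1c c0 c1 c2 y0 y1 (S (S k)))). pose proof (pow_le rho k Hr).
  split. apply Rmult_le_pos; auto. apply Rmult_le_compat_l; auto.
  apply Rle_trans with ((rho + 1) ^ k). apply pow_incr; lra.
  change ((rho + 1) ^ S (S k)) with ((rho + 1) * ((rho + 1) * (rho + 1) ^ k)).
  pose proof (pow_le (rho + 1) k ltac:(lra)).
  replace ((rho + 1) * ((rho + 1) * (rho + 1) ^ k)) with (((rho + 1) * (rho + 1)) * (rho + 1) ^ k) by ring.
  assert (1 <= (rho + 1) * (rho + 1)) by nra.
  replace ((rho + 1) ^ k) with (1 * (rho + 1) ^ k) at 1 by ring.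
  apply Rmult_le_compat_r; auto. Qed.

Lemma ys_coef a0 a1c c0 c1 c2 y0 y1 n :
  let y := ys a0 a1c c0 c1 c2 y0 y1 in
  dA (dA y) n = Cadd (Cmul a0 (dA y n)) (Cadd (Cmul a1c (shR (dA y) n))
     (Cadd (Cmul c0 (y n)) (Cadd (Cmul c1 (shR y n)) (Cmul c2 (shR (shR y) n))))).
Proof. intros y. set (z := zs a0 a1c c0 c1 c2 y0 y1).
  assert (E1 : shR y n = z (S n)) by (destruct n; reflexivity).
  assert (E2 : shR (shR y) n = z n) by (destruct n as [|[|n]]; reflexivity).
  assert (E3 : shR (dA y) n = Cmul (Defs.RtoC (INR n)) (z (S (S n)))).
  { destruct n. simpl. toC. ring. reflexivity. }
  rewrite E1, E2, E3. unfold dA.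
  assert (R : z (S (S (S (S n)))) = nxt a0 a1c c0 c1 c2 n (z n) (z (S n)) (z (S (S n))) (z (S (S (S n))))) by apply zs_rec.
  change (y (S (S n))) with (z (S (S (S (S n))))). change (y (S n)) with (z (S (S (S n)))). change (y n) with (z (S (S n))).
  rewrite R. unfold nxt. pose proof (pos_INR n).
  assert (0 < INR (S n)) by (rewrite S_INR; lra). assert (0 < INR (S (S n))) by (rewrite !S_INR; lra).
  toC. field. split; apply RtoC_nzC; lra. Qed.

Lemma ES_real_deriv b h : entire b ->
  Cderiv_at (fun t => ES b (Defs.RtoC t)) h (ES (dA b) (Defs.RtoC h)).
Proof. intros Hb. eapply Cderiv_eq. apply (ES_chain b (fun t => Defs.RtoC t)); auto. apply Cderiv_id.
  toC. ring. Qed.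

Lemma Y_ode a0 a1c c0 c1 c2 y0 y1 Z :
  let y := ys a0 a1c c0 c1 c2 y0 y1 in
  ES (dA (dA y)) Z = Cadd (Cmul (Cadd a0 (Cmul a1c Z)) (ES (dA y) Z))
                          (Cmul (Cadd c0 (Cadd (Cmul c1 Z) (Cmul c2 (Cmul Z Z)))) (ES y Z)).
Proof. intros y. assert (Ey : entire y) by apply entire_ys.
  assert (Ed : entire (dA y)) by (apply entire_dA; auto).
  assert (HC : forall n, dA (dA y) n = Cadd (Cmul a0 (dA y n)) (Cadd (Cmul a1c (shR (dA y) n))
     (Cadd (Cmul c0 (y n)) (Cadd (Cmul c1 (shR y n)) (Cmul c2 (shR (shR y) n)))))) by (intros; apply ys_coef).
  rewrite (ES_ext _ _ Z HC).
  rewrite !ES_add, !ES_scal, !ES_shR; auto.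
  toC. ring.
  all: repeat first [apply entire_add | apply entire_scal | apply entire_shR | apply entire_dA]; auto. Qed.

Lemma ys_0 a0 a1c c0 c1 c2 y0 y1 : ES (ys a0 a1c c0 c1 c2 y0 y1) (Defs.RtoC 0) = y0.
Proof. change (Defs.RtoC 0) with C0. rewrite ES_at0 by apply entire_ys. reflexivity. Qed.

Lemma ys_1 a0 a1c c0 c1 c2 y0 y1 : ES (dA (ys a0 a1c c0 c1 c2 y0 y1)) (Defs.RtoC 0) = y1.
Proof. change (Defs.RtoC 0) with C0. rewrite ES_at0 by (apply entire_dA, entire_ys).
  unfold dA. simpl INR. change (ys a0 a1c c0 c1 c2 y0 y1 1) with y1. toC. ring. Qed.

Lemma CSineq (x y : CC) : Rabs (fst x * fst y + snd x * snd y) <= Cmod x * Cmod y.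
Proof. pose proof (re_le_Cmod (Cmult (Cconj x) y)) as H.
  rewrite Cmod_mult, Cmod_conj in H. destruct x, y. unfold Re, Cmult, Cconj in H; simpl in *.
  replace (r * r1 - - r0 * r2) with (r * r1 + r0 * r2) in H by ring. exact H. Qed.

Lemma Cmod_sq' (x : CC) : Cmod x * Cmod x = fst x * fst x + snd x * snd x.
Proof. pose proof (Cmod2_alt x). simpl in H. unfold Re, Im in H. nra. Qed.

Lemma exp_lin_deriv k t : derivable_pt_lim (fun s => exp (k * s)) t (exp (k * t) * k).
Proof. eapply lim_eq. apply (derivable_pt_lim_comp (fun s => k * s) exp t k (exp (k * t))).
  eapply lim_eq. apply (derivable_pt_lim_scal (fun s => s) k t 1). apply derivable_pt_lim_id. ring.
  apply derivable_pt_lim_exp. ring. Qed.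

Lemma ode_unique (W W1 al be : R -> CC) :
  (forall h, Cderiv_at W h (W1 h)) ->
  (forall h, Cderiv_at W1 h (Cadd (Cmul (al h) (W1 h)) (Cmul (be h) (W h)))) ->
  (forall T, exists K, 0 <= K /\ forall h, Rabs h <= T -> Cmod (al h) <= K /\ Cmod (be h) <= K) ->
  W 0 = C0 -> W1 0 = C0 -> forall h, W h = C0.
Proof. intros HW HW1 Hb H0 H10.
  set (Z := fun h => Cadd (Cmul (al h) (W1 h)) (Cmul (be h) (W h))).
  set (En := fun h => fst (W h) * fst (W h) + snd (W h) * snd (W h) + (fst (W1 h) * fst (W1 h) + snd (W1 h) * snd (W1 h))).
  set (Enp := fun h => 2 * (fst (W h) * fst (W1 h) + snd (W h) * snd (W1 h)) + 2 * (fst (W1 h) * fst (Z h) + snd (W1 h) * snd (Z h))).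
  assert (Hd : forall h, derivable_pt_lim En h (Enp h)).
  { intros h. destruct (HW h) as [A1 A2]. destruct (HW1 h) as [B1 B2]. fold (Z h) in B1, B2.
    eapply lim_eq. exact (derivable_pt_lim_plus _ _ _ _ _
      (derivable_pt_lim_plus _ _ _ _ _ (derivable_pt_lim_mult _ _ _ _ _ A1 A1) (derivable_pt_lim_mult _ _ _ _ _ A2 A2))
      (derivable_pt_lim_plus _ _ _ _ _ (derivable_pt_lim_mult _ _ _ _ _ B1 B1) (derivable_pt_lim_mult _ _ _ _ _ B2 B2))).
    unfold Enp. cbv beta. ring. }
  assert (HE0 : En 0 = 0) by (unfold En; rewrite H0, H10; simpl; ring).
  assert (HEp : forall h, 0 <= En h) by (intros; unfold En; nra).
  assert (Hbd : forall T, exists K', 0 <= K' /\ forall h, Rabs h <= T -> Rabs (Enp h) <= K' * En h).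
  { intros T. destruct (Hb T) as [K [HK HKh]]. exists (1 + 3 * K). split. lra.
    intros h Hh. destruct (HKh h Hh) as [Ha Hbe].
    pose proof (CSineq (W h) (W1 h)) as C1. pose proof (CSineq (W1 h) (Z h)) as C2.
    set (a := Cmod (W h)) in *. set (b := Cmod (W1 h)) in *.
    assert (Ha0 : 0 <= a) by apply Cmod_ge_0. assert (Hb0 : 0 <= b) by apply Cmod_ge_0.
    assert (HZ : Cmod (Z h) <= K * b + K * a).
    { unfold Z. toC. eapply Rle_trans. apply Cmod_triangle. rewrite !Cmod_mult.
      apply Rplus_le_compat; apply Rmult_le_compat_r; auto. }
    assert (Ee : En h = a * a + b * b) by (unfold En, a, b; rewrite !Cmod_sq'; ring).
    rewrite Ee. unfold Enp. eapply Rle_trans. apply Rabs_triang. rewrite !Rabs_mult, Rabs_right by lra.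
    assert (b * Cmod (Z h) <= b * (K * b + K * a)) by (apply Rmult_le_compat_l; auto).
    assert (0 <= K * ((a - b) * (a - b))) by (apply Rmult_le_pos; [lra|apply Rle_0_sqr]).
    assert (0 <= (a - b) * (a - b)) by apply Rle_0_sqr. assert (0 <= K * (a * a)) by (apply Rmult_le_pos; nra). lra. }
  intros h. assert (Eh : En h = 0).
  { destruct (Hbd (Rabs h)) as [K [HK HKh]].
    destruct (Rtotal_order h 0) as [Hn|[Hz|Hp]].
    - set (G := fun t => En t * exp (K * t)).
      destruct (MVT_cor2 G (fun t => Enp t * exp (K * t) + En t * (exp (K * t) * K)) h 0 Hn) as [c [Hc Hc2]].
      { intros c _. exact (derivable_pt_lim_mult En (fun t => exp (K * t)) c _ _ (Hd c) (exp_lin_deriv K c)). }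
      assert (Hc3 : Rabs c <= Rabs h) by (rewrite !Rabs_left1; lra).
      pose proof (HKh c Hc3). pose proof (exp_pos (K * c)). pose proof (Rle_abs (- Enp c)). rewrite Rabs_Ropp in H2.
      assert (0 <= (Enp c * exp (K * c) + En c * (exp (K * c) * K)) * (0 - h)).
      { apply Rmult_le_pos; [|lra]. replace (Enp c * exp (K * c) + En c * (exp (K * c) * K)) with ((Enp c + K * En c) * exp (K * c)) by ring.
        apply Rmult_le_pos; lra. }
      unfold G in Hc. rewrite HE0 in Hc. pose proof (exp_pos (K * h)). pose proof (HEp h).
      assert (En h * exp (K * h) <= 0) by (rewrite Rmult_0_l in Hc; lra). nra.
    - subst; auto.
    - set (G := fun t => En t * exp ((- K) * t)).
      destruct (MVT_cor2 G (fun t => Enp t * exp ((- K) * t) + En t * (exp ((- K) * t) * (- K))) 0 h Hp) as [c [Hc Hc2]].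
      { intros c _. exact (derivable_pt_lim_mult En (fun t => exp ((- K) * t)) c _ _ (Hd c) (exp_lin_deriv (- K) c)). }
      assert (Hc3 : Rabs c <= Rabs h) by (rewrite !Rabs_right; lra).
      pose proof (HKh c Hc3). pose proof (exp_pos ((- K) * c)). pose proof (Rle_abs (Enp c)).
      assert ((Enp c * exp ((- K) * c) + En c * (exp ((- K) * c) * (- K))) * (h - 0) <= 0).
      { apply Rmult_le_0_r; [|lra]. replace (Enp c * exp ((- K) * c) + En c * (exp ((- K) * c) * (- K))) with ((Enp c - K * En c) * exp ((- K) * c)) by ring.
        apply Rmult_le_0_r; lra. }
      unfold G in Hc. rewrite HE0 in Hc. pose proof (exp_pos ((- K) * h)). pose proof (HEp h).
      assert (En h * exp ((- K) * h) <= 0) by (rewrite Rmult_0_l in Hc; lra). nra. }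
  unfold En in Eh. destruct (W h) as [p q]. simpl in Eh. unfold C0. f_equal; nra. Qed.

Lemma analytic_from_ode (u u1 u2 : R -> CC) (x0 : R) (a0 a1c c0 c1 c2 : CC) :
  (forall x, Cderiv_at u x (u1 x)) -> (forall x, Cderiv_at u1 x (u2 x)) ->
  (forall h, u2 (x0 + h) = Cadd (Cmul (Cadd a0 (Cmul a1c (Defs.RtoC h))) (u1 (x0 + h)))
       (Cmul (Cadd c0 (Cadd (Cmul c1 (Defs.RtoC h)) (Cmul c2 (Cmul (Defs.RtoC h) (Defs.RtoC h))))) (u (x0 + h)))) ->
  exists a, forall x, Cseries_cv (fun n => Cmul (a n) (Cpown (Defs.RtoC (x - x0)) n)) (u x).
Proof. intros Hu Hu1 Hode.
  set (y := ys a0 a1c c0 c1 c2 (u x0) (u1 x0)).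
  assert (Ey : entire y) by apply entire_ys.
  assert (Ed : entire (dA y)) by (apply entire_dA; auto).
  set (al := fun h => Cadd a0 (Cmul a1c (Defs.RtoC h))).
  set (be := fun h => Cadd c0 (Cadd (Cmul c1 (Defs.RtoC h)) (Cmul c2 (Cmul (Defs.RtoC h) (Defs.RtoC h))))).
  set (W := fun h => Csub (u (x0 + h)) (ES y (Defs.RtoC h))).
  set (W1 := fun h => Csub (u1 (x0 + h)) (ES (dA y) (Defs.RtoC h))).
  assert (HW : forall h, W h = C0).
  { apply (ode_unique W W1 al be).
    - intros h. apply Cderiv_sub. apply Cderiv_shift. apply Hu. apply ES_real_deriv; auto.
    - intros h. eapply Cderiv_eq. apply Cderiv_sub. apply Cderiv_shift. apply Hu1. apply ES_real_deriv; auto.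
      rewrite Hode. pose proof (Y_ode a0 a1c c0 c1 c2 (u x0) (u1 x0) (Defs.RtoC h)) as YO. cbv zeta in YO. fold y in YO.
      rewrite YO. unfold W, W1, al, be. toC. ring.
    - intros T. exists (Cmod a0 + Cmod a1c * Rabs T + (Cmod c0 + Cmod c1 * Rabs T + Cmod c2 * (Rabs T * Rabs T))).
      pose proof (Rabs_pos T). pose proof (Cmod_ge_0 a0). pose proof (Cmod_ge_0 a1c).
      pose proof (Cmod_ge_0 c0). pose proof (Cmod_ge_0 c1). pose proof (Cmod_ge_0 c2).
      split. assert (0 <= Cmod a1c * Rabs T) by nra. assert (0 <= Cmod c1 * Rabs T) by nra.
      assert (0 <= Cmod c2 * (Rabs T * Rabs T)) by (apply Rmult_le_pos; nra). lra.
      intros h Hh. assert (Hh' : Rabs h <= Rabs T) by (pose proof (Rle_abs T); lra).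
      assert (Ah : Cmod (Defs.RtoC h) <= Rabs T) by (rewrite Cmod_RtoC; lra).
      pose proof (Cmod_ge_0 (Defs.RtoC h)).
      assert (X1 : Cmod (al h) <= Cmod a0 + Cmod a1c * Rabs T).
      { unfold al. toC. eapply Rle_trans. apply Cmod_triangle. rewrite Cmod_mult.
        assert (Cmod a1c * Cmod (Complex.RtoC h) <= Cmod a1c * Rabs T) by (apply Rmult_le_compat_l; auto). lra. }
      assert (X2 : Cmod (be h) <= Cmod c0 + Cmod c1 * Rabs T + Cmod c2 * (Rabs T * Rabs T)).
      { unfold be. toC. eapply Rle_trans. apply Cmod_triangle. eapply Rle_trans. apply Rplus_le_compat_l. apply Cmod_triangle.
        rewrite !Cmod_mult.
        assert (Cmod c1 * Cmod (Complex.RtoC h) <= Cmod c1 * Rabs T) by (apply Rmult_le_compat_l; auto).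
        assert (Cmod (Complex.RtoC h) * Cmod (Complex.RtoC h) <= Rabs T * Rabs T) by (apply Rmult_le_compat; auto).
        assert (Cmod c2 * (Cmod (Complex.RtoC h) * Cmod (Complex.RtoC h)) <= Cmod c2 * (Rabs T * Rabs T)) by (apply Rmult_le_compat_l; auto).
        lra. }
      assert (0 <= Cmod a1c * Rabs T) by nra. assert (0 <= Cmod c1 * Rabs T) by nra.
      assert (0 <= Cmod c2 * (Rabs T * Rabs T)) by (apply Rmult_le_pos; nra).
      split; lra.
    - unfold W, y. rewrite Rplus_0_r, ys_0. toC. ring.
    - unfold W1, y. rewrite Rplus_0_r, ys_1. toC. ring. }
  exists y. intros x. pose proof (ES_cv y (Defs.RtoC (x - x0)) Ey) as Hc.
  replace (u x) with (ES y (Defs.RtoC (x - x0))); auto.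
  pose proof (HW (x - x0)) as Hx. unfold W in Hx. replace (x0 + (x - x0)) with x in Hx by ring.
  transitivity (Csub (u x) (Csub (u x) (ES y (Defs.RtoC (x - x0))))). toC; ring. rewrite Hx. toC; ring. Qed.

Lemma analytic_of_solves b20 b11 b02 b10 b01 b00 u : b20 <> C0 ->
  solves_B b20 b11 b02 b10 b01 b00 u -> C_analytic u.
Proof. intros Hb [u1 [u2 H]] x0. exists 1. split. lra.
  destruct (analytic_from_ode u u1 u2 x0
    (Defs.Cdiv (Defs.Copp (Cmul Ci (Cadd (Cmul b11 (Defs.RtoC x0)) b10))) b20)
    (Defs.Cdiv (Defs.Copp (Cmul Ci b11)) b20)
    (Defs.Cdiv (Cadd (Cmul b02 (Cmul (Defs.RtoC x0) (Defs.RtoC x0))) (Cadd (Cmul b01 (Defs.RtoC x0)) b00)) b20)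
    (Defs.Cdiv (Cadd (Cmul (Defs.RtoC 2) (Cmul b02 (Defs.RtoC x0))) b01) b20)
    (Defs.Cdiv b02 b20)) as [a Ha].
  - intros x. apply H.
  - intros x. apply H.
  - intros h. destruct (H (x0 + h)) as [_ [_ HB]].
    match goal with |- _ = ?R => transitivity (Cadd R (Defs.Cdiv (Defs.Copp (B_apply b20 b11 b02 b10 b01 b00 u u1 u2 (x0 + h))) b20)) end.
    + unfold B_apply. rewrite RtoC_plus'. toC. field. auto.
    + rewrite HB. toC. field. auto.
  - exists a. intros x _. apply Ha.
Qed.

Theorem proposition4p9 (b20 b11 b02 b10 b01 b00 : CC) :
  b20 <> C0 -> Delta2 b20 b11 b02 <> C0 ->
  C_analytic (u_sol1 b20 b11 b02 b10 b01 b00) /\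
  C_analytic (u_sol2 b20 b11 b02 b10 b01 b00) /\
  solves_B b20 b11 b02 b10 b01 b00 (u_sol1 b20 b11 b02 b10 b01 b00) /\
  solves_B b20 b11 b02 b10 b01 b00 (u_sol2 b20 b11 b02 b10 b01 b00) /\
  lin_indep2 (u_sol1 b20 b11 b02 b10 b01 b00) (u_sol2 b20 b11 b02 b10 b01 b00).
Proof.
  intros Hb HD. split; [|split; [|split; [|split]]].
  - eapply analytic_of_solves. exact Hb. apply solves1; auto.
  - eapply analytic_of_solves. exact Hb. apply solves2; auto.
  - apply solves1; auto.
  - apply solves2; auto.
  - apply lin_indep; auto.
Qed.
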